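(* Let $q_1,\dots,q_k$ be real polynomials, all of the same degree $m\ge1$, with $q_i(x)\to\infty$ as $x\to\infty$; write $a^{(i)}_m>0$ for the leading coefficient of $q_i$ and $c_{i,j}=(a^{(j)}_m/a^{(i)}_m)^{1/m}$. Let $1\le t_1<\dots<t_u\le k$. Then there exist integers $M=M(t_1,\dots,t_u)\ge0$ and $a=a(t_1,\dots,t_u)>0$ with $a\ge M$ such that $$\lim_{r\to\infty}\frac1r\Big|\Big\{1\le n\le r:\ q_{t_1}(n)\in\bigcap_{i=1}^u q_{t_i}(\mathbb N)\Big\}\Big|=\frac{M(t_1,\dots,t_u)}{a(t_1,\dots,t_u)},$$ where for $u=1$, $M=a=1$. Moreover, for $u>1$: (1) If for every $2\le i\le u$ one has $c_{t_i,t_1}=\beta_i/\alpha_i\in\mathbb Q$ with coprime positive integers $\alpha_i,\beta_i$, and there is $x_i\in\mathbb Q$ with $q_{t_i}(y)=q_{t_1}(c_{t_1,t_i}(y-x_i))$ for all $y\in\mathbb R$, then $a(t_1,\dots,t_u)=\mathrm{lcm}(\alpha_2,\dots,\alpha_u)$ and $M(t_1,\dots,t_u)=|(W_2\times\dots\times W_u)\cap V|$, where $W_i=\{0,1,\dots,\alpha_i-1\}\cap\frac{\alpha_i}{\beta_i}(\mathbb Z-x_i)$ and $V=\{(w_2,\dots,w_u): w_i-w_j\in\alpha_j\mathbb N-\alpha_i\mathbb N\ \forall i,j\}$ (i.e. the tuples for which the congruences $n\equiv w_i \pmod{\alpha_i}$, $2\le i\le u$, have a common solution). (2) If $c_{t_i,t_1}\notin\mathbb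 Q$ for some $i$, or $c_{t_i,t_1}\in\mathbb Q$ but for some $2\le i\le u$ no $x_i\in\mathbb Q$ satisfies the identity in (1), then $M(t_1,\dots,t_u)=0$. (3) Let $R$ be such that all $q_i$ are strictly increasing on $[R,\infty)$, put $A_i=q_1^{-1}(q_i(\mathbb N))$ (preimages taken in $[R,\infty)$) and $A=\bigcup_{i=1}^kA_i$. Then $$\lim_{r\to\infty}\frac{|\bigcap_{j=1}^uA_{t_j}\cap[1,r]|}r=c_{t_1,1}\frac{M(t_1,\dots,t_u)}{a(t_1,\dots,t_u)},$$ and $$\lim_{r\to\infty}\frac{|A\cap[1,r]|}r=\sum_{u=1}^k(-1)^{u+1}\sum_{1\le t_1<\dots<t_u\le k}c_{t_1,1}\frac{M(t_1,\dots,t_u)}{a(t_1,\dots,t_u)}=:c\ge1.$$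
   Context: $|\Gamma|$ denotes the cardinality of a finite set $\Gamma$; $\mathbb N$ is the set of positive integers. *)

(* Defs.v *)
From Stdlib Require Import Reals Lra Lia ZArith Arith List.
From Stdlib Require Import Classical ClassicalEpsilon.
Import ListNotations.
Open Scope R_scope.

(* Real polynomials as coefficient lists, lowest degree first:
   [a0; a1; ...; am] represents a0 + a1 x + ... + am x^m. *)
Fixpoint peval (p : list R) (x : R) : R :=
  match p with
  | nil => 0
  | a :: p' => a + x * peval p' x
  end.

Definition has_degree (p : list R) (m : nat) : Prop :=
  length p = S m /\ nth m p 0 <> 0.

Definition tends_to_infty (f : R -> R) : Prop :=
  forall B : R, exists X : R, forall x : R, X <= x -> B <= f x.

Definition lead (q : nat -> list R) (m i : nat) : R := nth m (q i) 0.

Definition cc (q : nat -> list R) (m i j : nat) : R :=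
  Rpower (lead q m j / lead q m i) (/ INR m).

Definition is_rat (x : R) : Prop :=
  exists p r : Z, (r <> 0)%Z /\ x = IZR p / IZR r.

Definition dec01 (P : Prop) : nat :=
  if excluded_middle_informative P then 1%nat else 0%nat.

Fixpoint ccount {A : Type} (P : A -> Prop) (l : list A) : nat :=
  match l with
  | nil => 0%nat
  | a :: l' => (dec01 (P a) + ccount P l')%nat
  end.

Definition cnt (P : nat -> Prop) (r : nat) : nat := ccount P (seq 1 r).

Definition valid_tuple (k : nat) (t : list nat) : Prop :=
  t <> nil /\
  (forall j, (S j < length t)%nat -> (nth j t 0 < nth (S j) t 0)%nat) /\
  (forall s, In s t -> (1 <= s <= k)%nat).

(* T t i = t_i (1-based) *)
Definition T (t : list nat) (i : nat) : nat := nth (i - 1) t 0%nat.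

(* n is counted: q_{t_1}(n) lies in q_{t_i}(N) for all 1 <= i <= u (N = positive integers) *)
Definition good (q : nat -> list R) (t : list nat) (n : nat) : Prop :=
  forall i, (1 <= i <= length t)%nat ->
    exists l : nat, (1 <= l)%nat /\ peval (q (T t i)) (INR l) = peval (q (T t 1)) (INR n).

Fixpoint tuples (bs : list nat) : list (list nat) :=
  match bs with
  | nil => [nil]
  | b :: bs' => flat_map (fun w => map (cons w) (tuples bs')) (seq 0 b)
  end.

Definition idx2 (u : nat) : list nat := seq 2 (u - 1).

Definition lcm_list (l : list nat) : nat := fold_right Nat.lcm 1%nat l.

Definition inW (al be : nat) (x : R) (w : nat) : Prop :=
  (w < al)%nat /\ exists z : Z, INR w = INR al / INR be * (IZR z - x).

(* w_i := nth (i-2) ws, for 2 <= i <= u *)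
Definition wcomp (ws : list nat) (i : nat) : nat := nth (i - 2) ws 0%nat.

Definition inV (u : nat) (al : nat -> nat) (ws : list nat) : Prop :=
  forall i j, (2 <= i <= u)%nat -> (2 <= j <= u)%nat ->
    exists a b : nat, (1 <= a)%nat /\ (1 <= b)%nat /\
      (Z.of_nat (wcomp ws i) - Z.of_nat (wcomp ws j)
       = Z.of_nat (al j * a) - Z.of_nat (al i * b))%Z.

Definition Mformula (u : nat) (al be : nat -> nat) (x : nat -> R) : nat :=
  ccount (fun ws => (forall i, (2 <= i <= u)%nat -> inW (al i) (be i) (x i) (wcomp ws i))
                    /\ inV u al ws)
         (tuples (map al (idx2 u))).

Definition shift_id (q : nat -> list R) (m : nat) (t : list nat) (i : nat) (x : R) : Prop :=
  forall y : R, peval (q (T t i)) y = peval (q (T t 1)) (cc q m (T t 1) (T t i) * (y - x)).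

Definition incr_from (q : nat -> list R) (k : nat) (R0 : R) : Prop :=
  forall i, (1 <= i <= k)%nat -> forall x y, R0 <= x -> x < y -> peval (q i) x < peval (q i) y.

Definition Aset (q : nat -> list R) (R0 : R) (i : nat) (z : R) : Prop :=
  R0 <= z /\ exists l : nat, (1 <= l)%nat /\ peval (q 1%nat) z = peval (q i) (INR l).

Definition has_card (S : R -> Prop) (n : nat) : Prop :=
  exists l : list R, NoDup l /\ length l = n /\ forall z, In z l <-> S z.

Fixpoint subseqs (l : list nat) : list (list nat) :=
  match l with
  | nil => [nil]
  | x :: l' => map (cons x) (subseqs l') ++ subseqs l'
  end.

Definition nonempty_subseqs (l : list nat) : list (list nat) :=
  filter (fun t => match t with nil => false | _ => true end) (subseqs l).

Definition Rsum_list (l : list R) : R := fold_right Rplus 0 l.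

(* Main.v *)
Require Import Defs.
From Stdlib Require Import Reals Lra Lia ZArith Arith List Classical ClassicalEpsilon Sorting.
From mathcomp Require ssreflect ssrbool ssrnat div prime.
Import ListNotations.

Open Scope nat_scope.

Module MC.
Import ssreflect ssrbool ssrnat div prime.

Lemma minmax (x y z : nat) : minn (maxn x y) z = maxn (minn x z) (minn y z).
Proof. rewrite !minnE !maxnE !subnE !addnE. lia. Qed.

Lemma dvd_conv d n : is_true (dvdn d n) <-> Nat.divide d n.
Proof.
  split.
  - move/dvdnP => [k ->]. exists k. by rewrite mulnE.
  - move=> [k Hk]. apply/dvdnP. exists k. by rewrite mulnE.
Qed.

Lemma distr a b c : 0 < a -> 0 < b -> 0 < c ->
  gcdn (lcmn a b) c = lcmn (gcdn a c) (gcdn b c).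
Proof.
  move=> Ha Hb Hc.
  have Hl : 0 < lcmn a b by rewrite lcmn_gt0 Ha Hb.
  have Hg1 : 0 < gcdn a c by rewrite gcdn_gt0 Ha.
  have Hg2 : 0 < gcdn b c by rewrite gcdn_gt0 Hb.
  apply: eqn_from_log.
  - by rewrite gcdn_gt0 Hl.
  - by rewrite lcmn_gt0 Hg1 Hg2.
  - move=> p. rewrite logn_gcd // logn_lcm // logn_lcm // logn_gcd // logn_gcd //.
    by rewrite minmax.
Qed.

Lemma gcdn_pos a b : 0 < a -> (0 < gcdn a b)%coq_nat.
Proof. move=> Ha. apply/ltP. by rewrite gcdn_gt0 Ha. Qed.
Lemma lcmn_pos a b : 0 < a -> 0 < b -> (0 < lcmn a b)%coq_nat.
Proof. move=> Ha Hb. apply/ltP. by rewrite lcmn_gt0 Ha Hb. Qed.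
Lemma dvd_gcdl a b : Nat.divide (gcdn a b) a.
Proof. apply/dvd_conv. apply dvdn_gcdl. Qed.
Lemma dvd_gcdr a b : Nat.divide (gcdn a b) b.
Proof. apply/dvd_conv. apply dvdn_gcdr. Qed.
Lemma dvd_gcd d a b : Nat.divide d a -> Nat.divide d b -> Nat.divide d (gcdn a b).
Proof. move=> /dvd_conv H1 /dvd_conv H2. apply/dvd_conv. by rewrite dvdn_gcd H1 H2. Qed.
Lemma dvd_lcml a b : Nat.divide a (lcmn a b).
Proof. apply/dvd_conv. apply dvdn_lcml. Qed.
Lemma dvd_lcmr a b : Nat.divide b (lcmn a b).
Proof. apply/dvd_conv. apply dvdn_lcmr. Qed.
Lemma dvd_lcm a b m : Nat.divide a m -> Nat.divide b m -> Nat.divide (lcmn a b) m.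
Proof. move=> /dvd_conv H1 /dvd_conv H2. apply/dvd_conv. by rewrite dvdn_lcm H1 H2. Qed.
Lemma pos_conv n : (0 < n)%coq_nat -> 0 < n.
Proof. move=> H. by apply/ltP. Qed.
End MC.

Open Scope Z_scope.
Goal forall a b : nat, (a <= b)%nat -> (a < S b)%nat. intros; lia. Qed.

Lemma Zdiv_nat (a b : nat) : (Z.of_nat a | Z.of_nat b) <-> Nat.divide a b.
Proof.
  split.
  - intros [k Hk]. destruct a as [|a'].
    + simpl in Hk. rewrite Z.mul_0_r in Hk. assert (b = 0%nat) by lia. subst. exists 0%nat. lia.
    + assert (0 <= k) by nia. exists (Z.to_nat k). apply Nat2Z.inj. rewrite Nat2Z.inj_mul, Z2Nat.id; lia.
  - intros [k Hk]. exists (Z.of_nat k). rewrite Hk, Nat2Z.inj_mul. reflexivity.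
Qed.

Lemma Zgcd_nat (a b : nat) : Z.gcd (Z.of_nat a) (Z.of_nat b) = Z.of_nat (div.gcdn a b).
Proof.
  apply Z.gcd_unique.
  - lia.
  - apply Zdiv_nat, MC.dvd_gcdl.
  - apply Zdiv_nat, MC.dvd_gcdr.
  - intros q H1 H2. apply Z.divide_abs_l. rewrite <- Nat2Z.inj_abs_nat.
    apply Zdiv_nat. apply Z.divide_abs_l in H1. apply Z.divide_abs_l in H2.
    rewrite <- Nat2Z.inj_abs_nat in H1, H2. apply Zdiv_nat in H1. apply Zdiv_nat in H2.
    apply MC.dvd_gcd; auto.
Qed.

Lemma Zlcm_nat (a b : nat) : Z.lcm (Z.of_nat a) (Z.of_nat b) = Z.of_nat (div.lcmn a b).
Proof.
  apply Z.lcm_unique.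
  - lia.
  - apply Zdiv_nat, MC.dvd_lcml.
  - apply Zdiv_nat, MC.dvd_lcmr.
  - intros q H1 H2. apply Z.divide_abs_r. rewrite <- Nat2Z.inj_abs_nat.
    apply Zdiv_nat. apply Z.divide_abs_r in H1. apply Z.divide_abs_r in H2.
    rewrite <- Nat2Z.inj_abs_nat in H1, H2. apply Zdiv_nat in H1. apply Zdiv_nat in H2.
    apply MC.dvd_lcm; auto.
Qed.

Lemma Zdistr (a b c : Z) : 0 < a -> 0 < b -> 0 < c ->
  Z.gcd (Z.lcm a b) c = Z.lcm (Z.gcd a c) (Z.gcd b c).
Proof.
  intros Ha Hb Hc.
  rewrite <- (Z2Nat.id a), <- (Z2Nat.id b), <- (Z2Nat.id c) by lia.
  rewrite Zlcm_nat, !Zgcd_nat, Zlcm_nat.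
  rewrite MC.distr; auto; apply MC.pos_conv; lia.
Qed.

Lemma crt2 m1 m2 r1 r2 : (Z.gcd m1 m2 | r1 - r2) -> exists x, (m1 | x - r1) /\ (m2 | x - r2).
Proof.
  intros [t Ht].
  destruct (Z.gcd_bezout m1 m2 (Z.gcd m1 m2) eq_refl) as [u [v Huv]].
  exists (r1 - u * m1 * t). split.
  - exists (- u * t). ring.
  - exists (v * t). rewrite <- Huv in Ht. lia.
Qed.

Definition zlcm (l : list Z) : Z := fold_right Z.lcm 1 l.

Lemma zlcm_pos l : (forall a, In a l -> 0 < a) -> 0 < zlcm l.
Proof.
  induction l; intros H; [unfold zlcm; simpl; lia|].
  change (zlcm (a :: l)) with (Z.lcm a (zlcm l)). simpl in H.
  assert (0 < a) by auto. assert (0 < zlcm l) by auto.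
  pose proof (Z.lcm_nonneg a (zlcm l)).
  destruct (Z.eq_dec (Z.lcm a (zlcm l)) 0) as [E|E]; [|lia].
  apply Z.lcm_eq_0 in E. lia.
Qed.

Lemma zlcm_dvd l a : In a l -> (a | zlcm l).
Proof.
  induction l; simpl; [tauto|]. change (zlcm (a0 :: l)) with (Z.lcm a0 (zlcm l)). intros [E|E].
  - subst. apply Z.divide_lcm_l.
  - eapply Z.divide_trans; [apply IHl; auto|apply Z.divide_lcm_r].
Qed.

Lemma gcd_zlcm_dvd l m y : 0 < m -> (forall a, In a l -> 0 < a) ->
  (forall a, In a l -> (Z.gcd a m | y)) -> (Z.gcd (zlcm l) m | y).
Proof.
  intros Hm; induction l; intros Hp H.
  - unfold zlcm; cbn [fold_right]. rewrite Z.gcd_1_l. apply Z.divide_1_l.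
  - change (zlcm (a :: l)) with (Z.lcm a (zlcm l)).
    rewrite Zdistr; simpl in *; auto. apply Z.lcm_least; auto.
    apply zlcm_pos; auto.
Qed.

Lemma crt_list (l : list (Z * Z)) :
  (forall p, In p l -> 0 < fst p) ->
  (forall p q, In p l -> In q l -> (Z.gcd (fst p) (fst q) | snd p - snd q)) ->
  exists x, forall p, In p l -> (fst p | x - snd p).
Proof.
  induction l as [|[m r] rest IH]; intros Hpos Hcomp.
  - exists 0. simpl; tauto.
  - destruct IH as [x0 Hx0].
    { intros; apply Hpos; simpl; auto. }
    { intros; apply Hcomp; simpl; auto. }
    assert (Hm : 0 < m) by (apply (Hpos (m, r)); simpl; auto).
    set (Lz := zlcm (map fst rest)).
    assert (HLz : 0 < Lz).
    { apply zlcm_pos. intros a Ha. apply in_map_iff in Ha. destruct Ha as [p [<- Hp]]. apply Hpos; simpl; auto. }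
    assert (Hg : (Z.gcd Lz m | x0 - r)).
    { apply gcd_zlcm_dvd; auto.
      - intros a Ha. apply in_map_iff in Ha. destruct Ha as [p [<- Hp]]. apply Hpos; simpl; auto.
      - intros a Ha. apply in_map_iff in Ha. destruct Ha as [[a' ra] [Ea Hp]]. simpl in Ea; subst a'.
        replace (x0 - r) with ((x0 - ra) + (ra - r)) by ring.
        apply Z.divide_add_r.
        + eapply Z.divide_trans; [apply Z.gcd_divide_l|]. apply (Hx0 (a, ra)); auto.
        + apply (Hcomp (a, ra) (m, r)); simpl; auto. }
    destruct (crt2 Lz m x0 r Hg) as [x [H1 H2]].
    exists x. intros p [E|Hp].
    + subst p. simpl. auto.
    + replace (x - snd p) with ((x - x0) + (x0 - snd p)) by ring.
      apply Z.divide_add_r; [|apply Hx0; auto].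
      eapply Z.divide_trans; [|apply H1]. apply zlcm_dvd. apply in_map; auto.
Qed.

Close Scope Z_scope.
Close Scope nat_scope.

Open Scope R_scope.

Lemma peval_app l1 l2 x : peval (l1 ++ l2) x = peval l1 x + x ^ (length l1) * peval l2 x.
Proof. induction l1; simpl; [ring|rewrite IHl1; ring]. Qed.

Definition Ok (k : nat) (f : R -> R) : Prop :=
  exists C, forall z, 1 <= z -> Rabs (f z) * z <= C * z ^ k.

Lemma Ok_pos k f : Ok k f -> exists C, 0 <= C /\ forall z, 1 <= z -> Rabs (f z) * z <= C * z ^ k.
Proof.
  intros [C HC]. exists (Rabs C). split; [apply Rabs_pos|].
  intros z Hz. eapply Rle_trans; [apply HC; auto|].
  apply Rmult_le_compat_r; [apply pow_le; lra| apply Rle_abs].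
Qed.

Lemma Ok_ext k f g : (forall z, f z = g z) -> Ok k f -> Ok k g.
Proof. intros E [C HC]; exists C; intros z Hz; rewrite <- E; auto. Qed.

Lemma Ok_zero k : Ok k (fun _ => 0).
Proof. exists 0; intros z Hz. rewrite Rabs_R0; lra. Qed.

Lemma Ok_plus k f g : Ok k f -> Ok k g -> Ok k (fun z => f z + g z).
Proof.
  intros [C HC] [D HD]; exists (C + D); intros z Hz.
  specialize (HC z Hz); specialize (HD z Hz).
  eapply Rle_trans; [apply Rmult_le_compat_r; [lra|apply Rabs_triang]|]. lra.
Qed.

Lemma Ok_scal k a f : Ok k f -> Ok k (fun z => a * f z).
Proof.
  intros [C HC]; exists (Rabs a * C); intros z Hz.
  rewrite Rabs_mult, Rmult_assoc, Rmult_assoc. apply Rmult_le_compat_l; [apply Rabs_pos|auto].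
Qed.

Lemma Ok_opp k f : Ok k f -> Ok k (fun z => - f z).
Proof. intros H; apply (Ok_ext k (fun z => -1 * f z)); [intros; ring|apply Ok_scal; auto]. Qed.

Lemma Ok_minus k f g : Ok k f -> Ok k g -> Ok k (fun z => f z - g z).
Proof. intros H1 H2; apply (Ok_ext k (fun z => f z + - g z)); [intros; ring|apply Ok_plus; auto; apply Ok_opp; auto]. Qed.

Lemma Ok_mono k j f : (k <= j)%nat -> Ok k f -> Ok j f.
Proof.
  intros Hkj H; destruct (Ok_pos _ _ H) as [C [HC0 HC]]; exists C; intros z Hz.
  eapply Rle_trans; [apply HC; auto|]. apply Rmult_le_compat_l; auto. apply Rle_pow; auto.
Qed.

Lemma Ok_const a : Ok 1 (fun _ => a).
Proof. exists (Rabs a); intros z Hz; simpl; lra. Qed.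

Lemma Ok_id : Ok 2 (fun z => z).
Proof. exists 1; intros z Hz; simpl. rewrite Rabs_right; lra. Qed.

Lemma Ok_mul k j f g : (1 <= j)%nat -> Ok k f -> Ok j g -> Ok (k + j - 1) (fun z => f z * g z).
Proof.
  intros Hj H1 H2.
  destruct (Ok_pos _ _ H1) as [C [HC0 HC]]; destruct (Ok_pos _ _ H2) as [D [HD0 HD]].
  exists (C * D); intros z Hz. specialize (HC z Hz); specialize (HD z Hz).
  apply Rmult_le_reg_r with z; [lra|].
  replace (C * D * z ^ (k + j - 1) * z) with ((C * z ^ k) * (D * z ^ j)).
  2:{ assert (E : z ^ (k + j - 1) * z = z ^ k * z ^ j).
      { rewrite <- pow_add. set (n := (k + j - 1)%nat).
        assert (Hn : (k + j)%nat = S n) by (unfold n; lia). rewrite Hn; simpl; ring. }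
      replace (C * D * z ^ (k + j - 1) * z) with (C * D * (z ^ (k + j - 1) * z)) by ring.
      rewrite E; ring. }
  rewrite Rabs_mult.
  replace (Rabs (f z) * Rabs (g z) * z * z) with ((Rabs (f z) * z) * (Rabs (g z) * z)) by ring.
  apply Rmult_le_compat; auto.
  - apply Rmult_le_pos; [apply Rabs_pos|lra].
  - apply Rmult_le_pos; [apply Rabs_pos|lra].
Qed.

Lemma Ok_peval l : Ok (length l) (peval l).
Proof.
  induction l as [|a p IH]; simpl.
  - apply Ok_zero.
  - apply Ok_plus.
    + apply Ok_mono with 1%nat; [lia|apply Ok_const].
    + apply (Ok_ext _ (fun z => peval p z * z)); [intros; ring|].
      replace (S (length p)) with (length p + 2 - 1)%nat by lia.
      apply Ok_mul; [lia|auto|apply Ok_id].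
Qed.

Lemma Ok_affine c e : Ok 2 (fun z => c * z + e).
Proof.
  apply Ok_plus; [apply Ok_scal, Ok_id|apply Ok_mono with 1%nat; [lia|apply Ok_const]].
Qed.

Lemma Ok_comp_affine l c e : Ok (length l) (fun z => peval l (c * z + e)).
Proof.
  induction l as [|a p IH]; simpl.
  - apply Ok_zero.
  - apply Ok_plus.
    + apply Ok_mono with 1%nat; [lia|apply Ok_const].
    + replace (S (length p)) with (length p + 2 - 1)%nat by lia.
      apply (Ok_ext _ (fun z => peval p (c * z + e) * (c * z + e))); [intros; ring|].
      apply Ok_mul; [lia|auto|apply Ok_affine].
Qed.

Lemma Ok_pow n : Ok (S n) (fun z => z ^ n).
Proof.
  induction n.
  - apply (Ok_ext _ (fun _ => 1)); [intros; simpl; ring|apply Ok_const].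
  - replace (S (S n)) with (S n + 2 - 1)%nat by lia.
    apply (Ok_ext _ (fun z => z ^ n * z)); [intros; simpl; ring|].
    apply Ok_mul; [lia|auto|apply Ok_id].
Qed.

Lemma Ok_monom n w : Ok n (fun z => INR n * w * z ^ (n - 1)).
Proof.
  destruct n.
  - apply (Ok_ext _ (fun _ => 0)); [intros; simpl; ring|apply Ok_zero].
  - apply Ok_scal. replace (S n - 1)%nat with n by lia. apply Ok_pow.
Qed.

Lemma G1 kappa j g : 0 < kappa -> Ok j g ->
  exists N, forall z, N <= z -> kappa * z ^ j + g z > 0.
Proof.
  intros Hk H; destruct (Ok_pos _ _ H) as [C [HC0 HC]].
  exists (Rmax 1 (C / kappa + 1)). intros z Hz.
  assert (H1 : 1 <= z) by (eapply Rle_trans; [apply Rmax_l|eauto]).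
  assert (H2 : C / kappa + 1 <= z) by (eapply Rle_trans; [apply Rmax_r|eauto]).
  specialize (HC z H1).
  assert (Hzj : 0 < z ^ j) by (apply pow_lt; lra).
  assert (Hkz : kappa * z - C > 0).
  { assert (C / kappa * kappa = C) by (field; lra).
    assert (kappa * z >= kappa * (C / kappa + 1)) by (apply Rle_ge, Rmult_le_compat_l; lra).
    nra. }
  apply Rmult_lt_reg_r with z; [lra|].
  assert (Rabs (g z) >= - g z) by (rewrite <- Rabs_Ropp; apply Rle_ge, Rle_abs).
  assert (z ^ j * (kappa * z - C) > 0) by (apply Rmult_gt_0_compat; lra).
  nra.
Qed.

Lemma G2 kappa j g : 0 < kappa -> (1 <= j)%nat -> Ok j g ->
  forall B, exists N, forall z, N <= z -> kappa * z ^ j + g z >= B.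
Proof.
  intros Hk Hj H B; destruct (Ok_pos _ _ H) as [C [HC0 HC]].
  exists (Rmax 1 ((Rabs B + C) / kappa + 1)). intros z Hz.
  assert (H1 : 1 <= z) by (eapply Rle_trans; [apply Rmax_l|eauto]).
  assert (H2 : (Rabs B + C) / kappa + 1 <= z) by (eapply Rle_trans; [apply Rmax_r|eauto]).
  specialize (HC z H1).
  assert (Hzj : z <= z ^ j).
  { replace z with (z ^ 1) at 1 by ring. apply Rle_pow; auto. }
  assert (Hkz : kappa * z - C >= Rabs B + kappa).
  { assert ((Rabs B + C) / kappa * kappa = Rabs B + C) by (field; lra).
    assert (kappa * z >= kappa * ((Rabs B + C) / kappa + 1)) by (apply Rle_ge, Rmult_le_compat_l; lra).
    nra. }
  assert (Rabs (g z) >= - g z) by (rewrite <- Rabs_Ropp; apply Rle_ge, Rle_abs).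
  assert (HB : Rabs B >= B) by (apply Rle_ge, Rle_abs).
  assert (Hpos : 0 <= kappa * z - C) by (pose proof (Rabs_pos B); lra).
  assert (z ^ j * (kappa * z - C) >= z * (kappa * z - C)) by (apply Rle_ge, Rmult_le_compat_r; lra).
  (* (kappa z^j + g) z >= z^j (kappa z - C) >= z (kappa z - C) >= z * B *)
  assert ((kappa * z ^ j + g z) * z >= B * z).
  { assert ((kappa * z ^ j + g z) * z >= z ^ j * (kappa * z - C)) by nra.
    assert (z * (kappa * z - C) >= z * B) by (apply Rle_ge, Rmult_le_compat_l; lra).
    nra. }
  apply Rle_ge, Rmult_le_reg_r with z; [lra|]. lra.
Qed.


Lemma list_last_decomp (l : list R) m : length l = S m ->
  l = firstn m l ++ [nth m l 0].
Proof.
  revert m; induction l as [|a p IH]; intros m H; simpl in *; [lia|].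
  destruct m; simpl.
  - destruct p; simpl in *; [reflexivity|lia].
  - f_equal. apply IH. lia.
Qed.

Lemma peval_last l m : length l = S m -> forall x,
  peval l x = peval (firstn m l) x + nth m l 0 * x ^ m.
Proof.
  intros H x. rewrite (list_last_decomp l m H) at 1. rewrite peval_app.
  rewrite length_firstn. replace (Nat.min m (length l)) with m by lia. simpl. ring.
Qed.

Lemma deg_form l m : has_degree l m ->
  forall x, peval l x = nth m l 0 * x ^ m + peval (firstn m l) x.
Proof. intros [H _] x. rewrite (peval_last l m H). ring. Qed.

Lemma deg_form_Ok l m : has_degree l m -> Ok m (peval (firstn m l)).
Proof.
  intros [H _]. pose proof (Ok_peval (firstn m l)) as O.
  rewrite length_firstn in O. replace (Nat.min m (length l)) with m in O by lia. exact O.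
Qed.

Lemma deg_decomp2 l m : has_degree l m -> (1 <= m)%nat ->
  forall x, peval l x = nth m l 0 * x ^ m + nth (m - 1) l 0 * x ^ (m - 1)
                        + peval (firstn (m - 1) l) x.
Proof.
  intros [H _] Hm x. rewrite (peval_last l m H).
  assert (H2 : length (firstn m l) = S (m - 1)).
  { rewrite length_firstn; lia. }
  rewrite (peval_last _ _ H2).
  rewrite firstn_firstn. replace (Nat.min (m - 1) m) with (m - 1)%nat by lia.
  rewrite nth_firstn. destruct (Nat.ltb_spec (m - 1) m); [|lia]. ring.
Qed.

Lemma len_firstn_m1 l m : has_degree l m -> length (firstn (m - 1) l) = (m - 1)%nat.
Proof. intros [H _]. rewrite length_firstn; lia. Qed.

Lemma lead_pos l m : has_degree l m -> (1 <= m)%nat -> tends_to_infty (peval l) -> 0 < nth m l 0.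
Proof.
  intros Hd Hm Hinf.
  destruct (Rtotal_order (nth m l 0) 0) as [Hlt|[Heq|Hgt]]; auto.
  - exfalso.
    destruct (G2 (- nth m l 0) m (fun z => - peval (firstn m l) z)) with (B := 0)
      as [N HN]; [lra|auto|apply Ok_opp, deg_form_Ok; auto|].
    destruct (Hinf 1) as [X HX].
    set (z := Rmax N X).
    specialize (HN z (Rmax_l _ _)). specialize (HX z (Rmax_r _ _)).
    rewrite (deg_form l m Hd) in HX. lra.
  - destruct Hd as [_ Hn]. contradiction.
Qed.

Fixpoint pabs (l : list R) (y : R) : R :=
  match l with nil => 0 | a :: p => Rabs a + y * pabs p y end.
Fixpoint pabsd (l : list R) (y : R) : R :=
  match l with nil => 0 | a :: p => pabs p y + y * pabsd p y end.

Lemma pabs_nonneg l y : 0 <= y -> 0 <= pabs l y.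
Proof.
  intros Hy; induction l; simpl; [lra|].
  pose proof (Rabs_pos a). pose proof (Rmult_le_pos _ _ Hy IHl). lra.
Qed.

Lemma pabsd_nonneg l y : 0 <= y -> 0 <= pabsd l y.
Proof.
  intros Hy; induction l; simpl; [lra|].
  pose proof (pabs_nonneg l y Hy). pose proof (Rmult_le_pos _ _ Hy IHl). lra.
Qed.

Lemma peval_le_pabs l y : 0 <= y -> Rabs (peval l y) <= pabs l y.
Proof.
  intros Hy; induction l; simpl; [rewrite Rabs_R0; lra|].
  eapply Rle_trans; [apply Rabs_triang|]. rewrite Rabs_mult, (Rabs_right y) by lra.
  apply Rplus_le_compat_l. apply Rmult_le_compat_l; auto.
Qed.

Lemma pabs_mono l y y' : 0 <= y -> y <= y' -> pabs l y <= pabs l y'.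
Proof.
  intros Hy Hyy; induction l; simpl; [lra|].
  apply Rplus_le_compat_l. apply Rmult_le_compat; auto; [apply pabs_nonneg; auto].
Qed.

Lemma peval_Lip l x y : 0 <= x -> x <= y ->
  Rabs (peval l y - peval l x) <= (y - x) * pabsd l y.
Proof.
  intros Hx Hxy; induction l as [|a p IH]; simpl.
  - replace (0 - 0) with 0 by ring. rewrite Rabs_R0; lra.
  - replace (a + y * peval p y - (a + x * peval p x)) with
      ((y - x) * peval p y + x * (peval p y - peval p x)) by ring.
    eapply Rle_trans; [apply Rabs_triang|]. rewrite !Rabs_mult.
    rewrite (Rabs_right (y - x)) by lra. rewrite (Rabs_right x) by lra.
    pose proof (peval_le_pabs p y ltac:(lra)).
    assert ((y - x) * Rabs (peval p y) <= (y - x) * pabs p y) by (apply Rmult_le_compat_l; lra).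
    assert (x * Rabs (peval p y - peval p x) <= x * ((y - x) * pabsd p y)) by (apply Rmult_le_compat_l; lra).
    pose proof (pabsd_nonneg p y ltac:(lra)).
    assert (x * ((y - x) * pabsd p y) <= y * ((y - x) * pabsd p y)).
    { apply Rmult_le_compat_r; [apply Rmult_le_pos|]; lra. }
    nra.
Qed.

Lemma Ok_pabs l : Ok (length l) (pabs l).
Proof.
  induction l as [|a p IH]; simpl.
  - apply Ok_zero.
  - apply Ok_plus.
    + apply Ok_mono with 1%nat; [lia|apply Ok_const].
    + apply (Ok_ext _ (fun z => pabs p z * z)); [intros; ring|].
      replace (S (length p)) with (length p + 2 - 1)%nat by lia.
      apply Ok_mul; [lia|auto|apply Ok_id].
Qed.

Lemma Ok_pabsd l : Ok (length l - 1) (pabsd l).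
Proof.
  induction l as [|a p IH]; simpl.
  - apply Ok_zero.
  - destruct p as [|b p'].
    + simpl. apply (Ok_ext _ (fun _ => 0)); [intros; simpl; ring|apply Ok_zero].
    + apply Ok_plus.
      * replace (length (b :: p') - 0)%nat with (length (b :: p')) by lia. apply Ok_pabs.
      * apply (Ok_ext _ (fun z => pabsd (b :: p') z * z)); [intros; ring|].
        replace (length (b :: p') - 0)%nat with (length (b :: p') - 1 + 2 - 1)%nat by (simpl; lia).
        apply Ok_mul; [lia|auto|apply Ok_id].
Qed.

Lemma pow_diff_ge x y m : 0 <= x -> x <= y -> (1 <= m)%nat ->
  y ^ m - x ^ m >= (y - x) * y ^ (m - 1).
Proof.
  intros Hx Hxy Hm. induction m as [|m IH]; [lia|].
  destruct m.
  - simpl. lra.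
  - assert (IH' : y ^ S m - x ^ S m >= (y - x) * y ^ m) by (replace m with (S m - 1)%nat at 3 by lia; apply IH; lia).
    replace (S (S m) - 1)%nat with (S m) by lia.
    assert (0 <= x ^ S m) by (apply pow_le; lra).
    replace (y ^ S (S m) - x ^ S (S m)) with (y * (y ^ S m - x ^ S m) + x ^ S m * (y - x)) by (simpl; ring).
    replace ((y - x) * y ^ S m) with (y * ((y - x) * y ^ m)) by (simpl; ring).
    assert (y * (y ^ S m - x ^ S m) >= y * ((y - x) * y ^ m)) by (apply Rle_ge, Rmult_le_compat_l; lra).
    assert (0 <= x ^ S m * (y - x)) by (apply Rmult_le_pos; lra). lra.
Qed.

Lemma eventually_incr l m : has_degree l m -> (1 <= m)%nat -> 0 < nth m l 0 ->
  exists X, 1 <= X /\ forall x y, X <= x -> x < y -> peval l x < peval l y.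
Proof.
  intros [Hlen Hn] Hm Ha.
  set (l1 := firstn m l).
  assert (Hl1 : length l1 = m) by (unfold l1; rewrite length_firstn; lia).
  destruct (G1 (nth m l 0) (m - 1) (fun z => - pabsd l1 z)) as [N HN]; auto.
  { apply Ok_opp. rewrite <- Hl1. apply Ok_pabsd. }
  exists (Rmax 1 N). split; [apply Rmax_l|]. intros x y Hx Hxy.
  assert (H1 : 1 <= x) by (eapply Rle_trans; [apply Rmax_l|eauto]).
  assert (HNy : N <= y) by (apply Rle_trans with (Rmax 1 N); [apply Rmax_r|lra]).
  specialize (HN y HNy).
  rewrite !(peval_last l m Hlen). fold l1.
  pose proof (peval_Lip l1 x y ltac:(lra) ltac:(lra)) as HL.
  pose proof (pow_diff_ge x y m ltac:(lra) ltac:(lra) Hm) as HP.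
  assert (- (peval l1 y - peval l1 x) <= (y - x) * pabsd l1 y).
  { eapply Rle_trans; [|apply HL]. rewrite <- Rabs_Ropp. apply Rle_abs. }
  assert (0 < (y - x) * (nth m l 0 * y ^ (m - 1) + - pabsd l1 y)) by (apply Rmult_lt_0_compat; lra).
  assert (nth m l 0 * (y ^ m - x ^ m) >= nth m l 0 * ((y - x) * y ^ (m - 1))) by (apply Rle_ge, Rmult_le_compat_l; lra).
  lra.
Qed.

Lemma peval_bound l X y : 0 <= y -> y <= X -> Rabs (peval l y) <= pabs l X.
Proof.
  intros H1 H2. eapply Rle_trans; [apply peval_le_pabs; auto|apply pabs_mono; auto].
Qed.


Definition Epow (c e : R) (n : nat) (z : R) : R :=
  (c * z + e) ^ n - c ^ n * z ^ n - INR n * c ^ (n - 1) * e * z ^ (n - 1).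

Lemma Ok_Epow c e n : Ok (n - 1) (Epow c e n).
Proof.
  destruct n.
  - apply (Ok_ext _ (fun _ => 0)); [intros; unfold Epow; simpl; ring|apply Ok_zero].
  - induction n.
    + apply (Ok_ext _ (fun _ => 0)); [intros; unfold Epow; simpl; ring|apply Ok_zero].
    + apply (Ok_ext _ (fun z => Epow c e (S n) z * (c * z + e) + INR (S n) * (c ^ n * e ^ 2) * z ^ (S n - 1))).
      { intros z; unfold Epow. replace (S (S n) - 1)%nat with (S n) by lia.
        replace (S n - 1)%nat with n by lia. rewrite !S_INR. simpl. ring. }
      replace (S (S n) - 1)%nat with (S n - 1 + 2 - 1)%nat by lia.
      apply Ok_plus.
      * apply Ok_mul; [lia|auto|apply Ok_affine].
      * replace (S n - 1 + 2 - 1)%nat with (S n) by lia.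
        apply (Ok_ext _ (fun z => INR (S n) * (c ^ n * e ^ 2) * z ^ (S n - 1))); [intros; ring|].
        apply Ok_monom.
Qed.

Definition cfac (P Q : list R) (m : nat) : R := Rpower (nth m P 0 / nth m Q 0) (/ INR m).

Section Key.
Variables (P Q : list R) (m : nat).
Hypotheses (HP : has_degree P m) (HQ : has_degree Q m) (Hm : (1 <= m)%nat)
  (HaP : 0 < nth m P 0) (HaQ : 0 < nth m Q 0).

Let aP := nth m P 0.
Let aQ := nth m Q 0.
Let bP := nth (m - 1) P 0.
Let bQ := nth (m - 1) Q 0.
Let c := cfac P Q m.

Lemma cfac_pos : 0 < c.
Proof. unfold c, cfac, Rpower. apply exp_pos. Qed.

Lemma cfac_powm : aQ * c ^ m = aP.
Proof.
  unfold c, cfac. rewrite <- Rpower_pow by (unfold Rpower; apply exp_pos).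
  rewrite Rpower_mult. rewrite Rinv_l by (apply not_0_INR; lia).
  rewrite Rpower_1 by (apply Rdiv_lt_0_compat; auto). unfold aP, aQ. field. lra.
Qed.

Definition Kfac := aQ * INR m * c ^ (m - 1).
Definition dfac := (bP - bQ * c ^ (m - 1)) / Kfac.

Lemma Kfac_pos : 0 < Kfac.
Proof.
  unfold Kfac. apply Rmult_lt_0_compat; [apply Rmult_lt_0_compat|apply pow_lt, cfac_pos]; auto.
  apply lt_0_INR; lia.
Qed.

Lemma key_expand e : Ok (m - 1) (fun z => peval Q (c * z + e) - peval P z - Kfac * (e - dfac) * z ^ (m - 1)).
Proof.
  apply (Ok_ext _ (fun z => aQ * Epow c e m z + bQ * (Epow c e (m - 1) z + INR (m - 1) * (c ^ (m - 1 - 1) * e) * z ^ (m - 1 - 1))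
                            + peval (firstn (m - 1) Q) (c * z + e) - peval (firstn (m - 1) P) z)).
  { intros z. rewrite (deg_decomp2 Q m HQ Hm), (deg_decomp2 P m HP Hm).
    fold aP aQ bP bQ. rewrite <- cfac_powm.
    assert (E : Kfac * (e - dfac) = aQ * INR m * c ^ (m - 1) * e - (bP - bQ * c ^ (m - 1))).
    { unfold dfac. pose proof Kfac_pos. field_simplify; [|lra]. unfold Kfac. ring. }
    rewrite E. unfold Epow. ring. }
  apply Ok_minus.
  - apply Ok_plus; [apply Ok_plus|].
    + apply Ok_scal. apply Ok_Epow.
    + apply Ok_scal. apply Ok_plus.
      * apply Ok_mono with (m - 1 - 1)%nat; [lia|apply Ok_Epow].
      * apply Ok_monom.
    + rewrite <- (len_firstn_m1 Q m HQ) at 1. apply Ok_comp_affine.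
  - rewrite <- (len_firstn_m1 P m HP) at 1. apply Ok_peval.
Qed.

Lemma key_sign_pos e : dfac < e -> exists N, forall z, N <= z -> peval Q (c * z + e) - peval P z > 0.
Proof.
  intros He.
  destruct (G1 (Kfac * (e - dfac)) (m - 1) _ ltac:(apply Rmult_lt_0_compat; [apply Kfac_pos|lra]) (key_expand e)) as [N HN].
  exists N; intros z Hz; specialize (HN z Hz). lra.
Qed.

Lemma key_sign_neg e : e < dfac -> exists N, forall z, N <= z -> peval Q (c * z + e) - peval P z < 0.
Proof.
  intros He.
  destruct (G1 (Kfac * (dfac - e)) (m - 1) _ ltac:(apply Rmult_lt_0_compat; [apply Kfac_pos|lra]) (Ok_opp _ _ (key_expand e))) as [N HN].
  exists N; intros z Hz; specialize (HN z Hz). lra.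
Qed.

Lemma key_unique e : (forall z, peval Q (c * z + e) = peval P z) -> e = dfac.
Proof.
  intros H. destruct (Rtotal_order e dfac) as [Hl|[He|Hg]]; auto.
  - destruct (key_sign_neg e Hl) as [N HN]. specialize (HN N (Rle_refl _)). rewrite H in HN. lra.
  - destruct (key_sign_pos e Hg) as [N HN]. specialize (HN N (Rle_refl _)). rewrite H in HN. lra.
Qed.

Lemma poly_big (L : list R) : has_degree L m -> 0 < nth m L 0 ->
  forall B, exists N, forall z, N <= z -> peval L z >= B.
Proof.
  intros HL Ha B.
  destruct (G2 (nth m L 0) m _ Ha Hm (deg_form_Ok L m HL) B) as [N HN].
  exists N; intros z Hz. rewrite (deg_form L m HL). apply HN; auto.
Qed.

Lemma key_approx : forall delta, 0 < delta -> exists N, forall n l, N <= n -> 1 <= l ->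
  peval Q l = peval P n -> Rabs (l - c * n - dfac) < delta.
Proof.
  intros delta Hd.
  destruct (eventually_incr Q m HQ Hm HaQ) as [X [HX1 HX]].
  destruct (poly_big P HP HaP (pabs Q X + 1)) as [N1 HN1].
  destruct (key_sign_pos (dfac + delta) ltac:(lra)) as [N2 HN2].
  destruct (key_sign_neg (dfac - delta) ltac:(lra)) as [N3 HN3].
  pose proof cfac_pos as Hc.
  set (N4 := (X + Rabs dfac + delta) / c).
  exists (Rmax (Rmax N1 N2) (Rmax N3 N4)). intros n l Hn Hl HQP.
  assert (H1 : N1 <= n) by (apply Rle_trans with (Rmax (Rmax N1 N2) (Rmax N3 N4)); auto; apply Rle_trans with (Rmax N1 N2); apply Rmax_l).
  assert (H2 : N2 <= n) by (apply Rle_trans with (Rmax (Rmax N1 N2) (Rmax N3 N4)); auto; apply Rle_trans with (Rmax N1 N2); [apply Rmax_r|apply Rmax_l]).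
  assert (H3 : N3 <= n) by (apply Rle_trans with (Rmax (Rmax N1 N2) (Rmax N3 N4)); auto; apply Rle_trans with (Rmax N3 N4); [apply Rmax_l|apply Rmax_r]).
  assert (H4 : N4 <= n) by (apply Rle_trans with (Rmax (Rmax N1 N2) (Rmax N3 N4)); auto; apply Rle_trans with (Rmax N3 N4); apply Rmax_r).
  specialize (HN1 n H1). specialize (HN2 n H2). specialize (HN3 n H3).
  assert (HcN : c * n >= X + Rabs dfac + delta).
  { unfold N4 in H4. apply Rmult_le_compat_l with (r := c) in H4; [|lra].
    replace (c * ((X + Rabs dfac + delta) / c)) with (X + Rabs dfac + delta) in H4 by (field; lra).
    lra. }
  pose proof (Rle_abs dfac). pose proof (Rle_abs (- dfac)). rewrite Rabs_Ropp in *.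
  assert (HlX : X < l).
  { destruct (Rlt_or_le X l) as [h|h]; auto. exfalso.
    pose proof (peval_bound Q X l ltac:(lra) h) as Hb. rewrite HQP in Hb. pose proof (Rle_abs (peval P n)). lra. }
  apply Rabs_def1.
  - destruct (Rlt_or_le (l - c * n - dfac) delta) as [h|h]; auto. exfalso.
    destruct (Req_dec l (c * n + (dfac + delta))) as [E|E].
    + rewrite E in HQP. lra.
    + assert (c * n + (dfac + delta) < l) by lra.
      pose proof (HX (c * n + (dfac + delta)) l ltac:(lra) ltac:(lra)). lra.
  - destruct (Rlt_or_le (- delta) (l - c * n - dfac)) as [h|h]; auto. exfalso.
    destruct (Req_dec l (c * n + (dfac - delta))) as [E|E].
    + rewrite E in HQP. lra.
    + assert (l < c * n + (dfac - delta)) by lra.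
      pose proof (HX l (c * n + (dfac - delta)) ltac:(lra) ltac:(lra)). lra.
Qed.

End Key.


Fixpoint padd (l1 l2 : list R) : list R :=
  match l1, l2 with
  | nil, _ => l2
  | _, nil => l1
  | a :: p, b :: q => (a + b) :: padd p q
  end.

Lemma peval_padd l1 l2 z : peval (padd l1 l2) z = peval l1 z + peval l2 z.
Proof.
  revert l2; induction l1 as [|a p IH]; intros [|b q]; simpl; try ring.
  rewrite IH; ring.
Qed.

Lemma peval_scal a l z : peval (map (Rmult a) l) z = a * peval l z.
Proof. induction l; simpl; [ring|rewrite IHl; ring]. Qed.

Lemma peval_comp_affine_list l c e : exists l', forall z, peval l (c * z + e) = peval l' z.
Proof.
  induction l as [|a p [p' IH]].
  - exists nil; intros; reflexivity.
  - exists (padd [a] (padd (0 :: map (Rmult c) p') (map (Rmult e) p'))).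
    intros z. rewrite !peval_padd. simpl. rewrite !peval_scal, IH. ring.
Qed.

Lemma poly_ev_nonzero l : (forall z, peval l z = 0) \/ exists N, forall z, N <= z -> peval l z <> 0.
Proof.
  induction l as [|a l IH] using rev_ind.
  - left; intros; reflexivity.
  - destruct (Rtotal_order a 0) as [Ha|[Ha|Ha]].
    + right.
      destruct (G1 (- a) (length l) (fun z => - peval l z) ltac:(lra) (Ok_opp _ _ (Ok_peval l))) as [N HN].
      exists N; intros z Hz. specialize (HN z Hz). rewrite peval_app. simpl. lra.
    + subst. destruct IH as [IH|[N IH]].
      * left; intros z; rewrite peval_app, IH; simpl; ring.
      * right; exists N; intros z Hz. rewrite peval_app; simpl.
        replace (peval l z + z ^ length l * (0 + z * 0)) with (peval l z) by ring. auto.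
    + right.
      destruct (G1 a (length l) (peval l) Ha (Ok_peval l)) as [N HN].
      exists N; intros z Hz. specialize (HN z Hz). rewrite peval_app. simpl. lra.
Qed.

Lemma poly_diff_ev P Q c e :
  (forall z, peval Q (c * z + e) = peval P z) \/
  exists N, forall z, N <= z -> peval Q (c * z + e) <> peval P z.
Proof.
  destruct (peval_comp_affine_list Q c e) as [l' Hl'].
  destruct (poly_ev_nonzero (padd l' (map (Rmult (-1)) P))) as [H|[N H]].
  - left; intros z. specialize (H z). rewrite peval_padd, peval_scal, <- Hl' in H. lra.
  - right; exists N; intros z Hz E. apply (H z Hz). rewrite peval_padd, peval_scal, <- Hl', E. ring.
Qed.

Lemma peval_continuous l : continuity (peval l).
Proof.
  induction l as [|a p IH]; simpl.
  - apply continuity_const. intros x y; reflexivity.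
  - apply continuity_plus.
    + apply continuity_const. intros x y; reflexivity.
    + apply continuity_mult; auto. apply derivable_continuous, derivable_id.
Qed.


Lemma dec01_true (P : Prop) : P -> dec01 P = 1%nat.
Proof. intros H; unfold dec01; destruct (excluded_middle_informative P); tauto. Qed.
Lemma dec01_false (P : Prop) : ~ P -> dec01 P = 0%nat.
Proof. intros H; unfold dec01; destruct (excluded_middle_informative P); tauto. Qed.
Lemma dec01_le1 P : (dec01 P <= 1)%nat.
Proof. unfold dec01; destruct (excluded_middle_informative P); lia. Qed.
Lemma dec01_mono (P P' : Prop) : (P -> P') -> (dec01 P <= dec01 P')%nat.
Proof. intros H; unfold dec01; destruct (excluded_middle_informative P); destruct (excluded_middle_informative P'); tauto || lia. Qed.
Lemma dec01_iff (P P' : Prop) : (P <-> P') -> dec01 P = dec01 P'.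
Proof. intros H; apply Nat.le_antisymm; apply dec01_mono; tauto. Qed.

Lemma ccount_app {A} (P : A -> Prop) l1 l2 : ccount P (l1 ++ l2) = (ccount P l1 + ccount P l2)%nat.
Proof. induction l1; simpl; lia. Qed.

Lemma ccount_le_length {A} (P : A -> Prop) l : (ccount P l <= length l)%nat.
Proof. induction l; simpl; [lia|]. pose proof (dec01_le1 (P a)). lia. Qed.

Lemma ccount_mono {A} (P P' : A -> Prop) l : (forall x, In x l -> P x -> P' x) -> (ccount P l <= ccount P' l)%nat.
Proof.
  induction l; simpl; intros H; [lia|].
  pose proof (dec01_mono (P a) (P' a) (H a (or_introl eq_refl))).
  assert (ccount P l <= ccount P' l)%nat by (apply IHl; intros; apply H; auto). lia.
Qed.

Lemma ccount_ext {A} (P P' : A -> Prop) l : (forall x, In x l -> (P x <-> P' x)) -> ccount P l = ccount P' l.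
Proof.
  intros H; apply Nat.le_antisymm; apply ccount_mono; intros x Hx; apply H; auto.
Qed.

Lemma ccount_zero {A} (P : A -> Prop) l : (forall x, In x l -> ~ P x) -> ccount P l = 0%nat.
Proof.
  induction l; simpl; intros H; auto. rewrite dec01_false by (apply H; auto). rewrite IHl; auto.
Qed.

Lemma ccount_all {A} (P : A -> Prop) l : (forall x, In x l -> P x) -> ccount P l = length l.
Proof.
  induction l; simpl; intros H; auto. rewrite dec01_true by (apply H; auto). rewrite IHl; auto.
Qed.

Lemma cnt_add P a b : cnt P (a + b) = (cnt P a + ccount P (seq (S a) b))%nat.
Proof. unfold cnt. rewrite seq_app, ccount_app. reflexivity. Qed.

Lemma cnt_S P r : cnt P (S r) = (cnt P r + dec01 (P (S r)))%nat.
Proof. replace (S r) with (r + 1)%nat by lia. rewrite cnt_add. simpl.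
  replace (r + 1)%nat with (S r) by lia. lia. Qed.

Lemma cnt_le P r : (cnt P r <= r)%nat.
Proof. unfold cnt. pose proof (ccount_le_length P (seq 1 r)). rewrite length_seq in H. auto. Qed.

Lemma cnt_mono P P' r : (forall n, P n -> P' n) -> (cnt P r <= cnt P' r)%nat.
Proof. intros H; apply ccount_mono; auto. Qed.

Lemma cnt_ev_close P P' N : (forall n, (N <= n)%nat -> (P n <-> P' n)) ->
  forall r, (cnt P r <= cnt P' r + N)%nat.
Proof.
  intros H r; induction r.
  - unfold cnt; simpl; lia.
  - rewrite !cnt_S. destruct (le_lt_dec N (S r)) as [h|h].
    + rewrite (dec01_iff _ _ (H _ h)). lia.
    + pose proof (cnt_le P (S r)). rewrite cnt_S in H0. lia.
Qed.

Definition approx (y : nat -> R) (rho : R) : Prop :=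
  forall eps, 0 < eps -> exists K, forall r, Rabs (y r - rho * INR r) <= eps * INR r + K.

Lemma nat_above x : exists N : nat, x < INR N.
Proof.
  destruct (archimed (Rabs x)) as [H1 _].
  exists (Z.to_nat (up (Rabs x))).
  rewrite INR_IZR_INZ, Z2Nat.id.
  - pose proof (Rle_abs x); lra.
  - apply le_IZR. pose proof (Rabs_pos x). lra.
Qed.

Lemma approx_cv y rho : approx y rho -> Un_cv (fun r => y r / INR r) rho.
Proof.
  intros H eps Heps.
  destruct (H (eps / 2) ltac:(lra)) as [K HK].
  destruct (nat_above (2 * Rabs K / eps)) as [N HN].
  exists (S N). intros n Hn. unfold R_dist.
  assert (Hn0 : 0 < INR n) by (apply lt_0_INR; lia).
  assert (HnN : INR N < INR n) by (apply lt_INR; lia).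
  replace (y n / INR n - rho) with ((y n - rho * INR n) / INR n) by (field; lra).
  unfold Rdiv; rewrite Rabs_mult, Rabs_inv, (Rabs_right (INR n)) by lra. fold (Rabs (y n - rho * INR n) / INR n).
  apply Rmult_lt_reg_r with (INR n); [lra|].
  unfold Rdiv. rewrite Rmult_assoc, Rinv_l, Rmult_1_r by lra.
  specialize (HK n).
  assert (2 * Rabs K / eps * eps = 2 * Rabs K) by (field; lra).
  assert (2 * Rabs K < eps * INR n).
  { assert (2 * Rabs K / eps * eps < INR n * eps) by (apply Rmult_lt_compat_r; lra). lra. }
  pose proof (Rle_abs K). lra.
Qed.

Lemma cv_approx y rho : Un_cv (fun r => y r / INR r) rho -> approx y rho.
Proof.
  intros H eps Heps.
  destruct (H eps Heps) as [N HN].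
  set (K := fold_right Rplus 0 (map (fun r => Rabs (y r - rho * INR r)) (seq 0 (S N)))).
  assert (HK0 : forall r, (r <= N)%nat -> Rabs (y r - rho * INR r) <= K).
  { intros r Hr. unfold K.
    assert (Hin : In r (seq 0 (S N))) by (apply in_seq; lia).
    generalize (seq 0 (S N)) Hin. induction l; simpl; [tauto|].
    assert (forall l, 0 <= fold_right Rplus 0 (map (fun r => Rabs (y r - rho * INR r)) l)).
    { induction l0; simpl; [lra|]. pose proof (Rabs_pos (y a0 - rho * INR a0)). lra. }
    intros [E|E]; [subst; specialize (H0 l); lra|]. specialize (IHl E).
    pose proof (Rabs_pos (y a - rho * INR a)). lra. }
  exists K. intros r.
  destruct (le_lt_dec r N) as [h|h].
  - pose proof (HK0 r h). pose proof (pos_INR r). assert (0 <= eps * INR r) by (apply Rmult_le_pos; lra). lra.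
  - assert (h' : (r >= N)%nat) by lia. specialize (HN r h'). unfold R_dist in HN.
    assert (Hr : 0 < INR r) by (apply lt_0_INR; lia).
    replace (y r - rho * INR r) with ((y r / INR r - rho) * INR r) by (field; lra).
    rewrite Rabs_mult, (Rabs_right (INR r)) by lra.
    assert (0 <= K) by (pose proof (HK0 0%nat ltac:(lia)); pose proof (Rabs_pos (y 0%nat - rho * INR 0)); lra).
    assert (Rabs (y r / INR r - rho) * INR r <= eps * INR r) by (apply Rmult_le_compat_r; lra). lra.
Qed.

Lemma approx_close y y' rho B : (forall r, Rabs (y r - y' r) <= B) -> approx y rho -> approx y' rho.
Proof.
  intros HB H eps Heps. destruct (H eps Heps) as [K HK]. exists (K + B). intros r.
  specialize (HK r); specialize (HB r).
  replace (y' r - rho * INR r) with ((y r - rho * INR r) - (y r - y' r)) by ring.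
  eapply Rle_trans; [apply Rabs_triang|]. rewrite Rabs_Ropp. lra.
Qed.

Lemma approx_plus y1 y2 r1 r2 : approx y1 r1 -> approx y2 r2 -> approx (fun r => y1 r + y2 r) (r1 + r2).
Proof.
  intros H1 H2 eps Heps.
  destruct (H1 (eps/2) ltac:(lra)) as [K1 HK1]; destruct (H2 (eps/2) ltac:(lra)) as [K2 HK2].
  exists (K1 + K2); intros r. specialize (HK1 r); specialize (HK2 r).
  replace (y1 r + y2 r - (r1 + r2) * INR r) with ((y1 r - r1 * INR r) + (y2 r - r2 * INR r)) by ring.
  eapply Rle_trans; [apply Rabs_triang|]. lra.
Qed.

Lemma approx_scal a y rho : approx y rho -> approx (fun r => a * y r) (a * rho).
Proof.
  intros H eps Heps.
  destruct (H (eps / (Rabs a + 1))) as [K HK].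
  { apply Rdiv_lt_0_compat; [lra|pose proof (Rabs_pos a); lra]. }
  exists (Rabs a * Rabs K). intros r. specialize (HK r).
  replace (a * y r - a * rho * INR r) with (a * (y r - rho * INR r)) by ring.
  rewrite Rabs_mult. pose proof (Rabs_pos a). pose proof (pos_INR r).
  assert (Rabs a * Rabs (y r - rho * INR r) <= Rabs a * (eps / (Rabs a + 1) * INR r + K)) by (apply Rmult_le_compat_l; lra).
  assert (Rabs a * (eps / (Rabs a + 1) * INR r) <= eps * INR r).
  { replace (Rabs a * (eps / (Rabs a + 1) * INR r)) with ((Rabs a / (Rabs a + 1)) * (eps * INR r)) by (field; lra).
    assert (Rabs a / (Rabs a + 1) <= 1) by (apply Rmult_le_reg_r with (Rabs a + 1); [lra|]; unfold Rdiv; rewrite Rmult_assoc, Rinv_l; lra).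
    assert (0 <= eps * INR r) by (apply Rmult_le_pos; lra).
    assert (0 <= Rabs a / (Rabs a + 1)) by (apply Rmult_le_pos; [lra|left; apply Rinv_0_lt_compat; lra]).
    nra. }
  pose proof (Rle_abs K).
  assert (Rabs a * K <= Rabs a * Rabs K) by (apply Rmult_le_compat_l; lra). lra.
Qed.

Lemma approx_comp y rho (s : nat -> nat) lam B : 0 <= lam ->
  (forall r, Rabs (INR (s r) - lam * INR r) <= B) -> approx y rho ->
  approx (fun r => y (s r)) (lam * rho).
Proof.
  intros Hlam Hs H eps Heps.
  destruct (H (eps / (lam + 1))) as [K HK]; [apply Rdiv_lt_0_compat; lra|].
  exists (eps / (lam + 1) * Rabs B + Rabs K + Rabs rho * Rabs B). intros r.
  specialize (HK (s r)). specialize (Hs r).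
  replace (y (s r) - lam * rho * INR r) with ((y (s r) - rho * INR (s r)) + rho * (INR (s r) - lam * INR r)) by ring.
  eapply Rle_trans; [apply Rabs_triang|]. rewrite Rabs_mult.
  assert (Rabs rho * Rabs (INR (s r) - lam * INR r) <= Rabs rho * Rabs B).
  { apply Rmult_le_compat_l; [apply Rabs_pos|]. eapply Rle_trans; [apply Hs|apply Rle_abs]. }
  assert (INR (s r) <= lam * INR r + Rabs B).
  { pose proof (Rle_abs (INR (s r) - lam * INR r)). pose proof (Rle_abs B). lra. }
  assert (Hep : 0 < eps / (lam + 1)) by (apply Rdiv_lt_0_compat; lra).
  assert (eps / (lam + 1) * INR (s r) <= eps / (lam + 1) * (lam * INR r + Rabs B)) by (apply Rmult_le_compat_l; lra).
  assert (eps / (lam + 1) * (lam * INR r) <= eps * INR r).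
  { replace (eps / (lam + 1) * (lam * INR r)) with ((lam / (lam + 1)) * (eps * INR r)) by (field; lra).
    assert (lam / (lam + 1) <= 1) by (apply Rmult_le_reg_r with (lam + 1); [lra|]; unfold Rdiv; rewrite Rmult_assoc, Rinv_l; lra).
    pose proof (pos_INR r). assert (0 <= eps * INR r) by (apply Rmult_le_pos; lra).
    assert (0 <= lam / (lam + 1)) by (apply Rmult_le_pos; [lra|left; apply Rinv_0_lt_compat; lra]). nra. }
  pose proof (Rle_abs K). lra.
Qed.


Definition dens (P : nat -> Prop) (rho : R) : Prop := approx (fun r => INR (cnt P r)) rho.

Lemma dens_ev P P' rho N : (forall n, (N <= n)%nat -> (P n <-> P' n)) -> dens P rho -> dens P' rho.
Proof.
  intros H D. apply approx_close with (y := fun r => INR (cnt P r)) (B := INR N); auto.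
  intros r. pose proof (cnt_ev_close P P' N H r).
  assert (H' : forall n, (N <= n)%nat -> (P' n <-> P n)) by (intros; split; apply H; auto).
  pose proof (cnt_ev_close P' P N H' r).
  apply le_INR in H0. rewrite plus_INR in H0. apply le_INR in H1. rewrite plus_INR in H1.
  apply Rabs_le. split; lra.
Qed.

Lemma dens_all P : (forall n, (1 <= n)%nat -> P n) -> dens P 1.
Proof.
  intros H eps Heps. exists 0. intros r.
  unfold cnt. rewrite ccount_all.
  - rewrite length_seq. replace (INR r - 1 * INR r) with 0 by ring. rewrite Rabs_R0.
    pose proof (pos_INR r). assert (0 <= eps * INR r) by (apply Rmult_le_pos; lra). lra.
  - intros x Hx. apply in_seq in Hx. apply H. lia.
Qed.

Lemma dens_mono_zero P P' : (forall n, P n -> P' n) -> dens P' 0 -> dens P 0.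
Proof.
  intros H D eps Heps. destruct (D eps Heps) as [K HK]. exists K. intros r. specialize (HK r).
  pose proof (cnt_mono P P' r H). apply le_INR in H0.
  rewrite Rmult_0_l, Rminus_0_r in *. rewrite Rabs_right in * by (apply Rle_ge, pos_INR). lra.
Qed.

Section Periodic.
Variables (P : nat -> Prop) (Pm : nat -> Prop) (L : nat).
Hypotheses (HL : (0 < L)%nat) (HP : forall n, P n <-> Pm (n mod L)).
Let w := ccount Pm (seq 0 L).

Lemma window a : ccount P (seq a L) = w.
Proof.
  induction a.
  - unfold w. apply ccount_ext. intros x Hx. apply in_seq in Hx. rewrite HP, Nat.mod_small by lia. tauto.
  - rewrite <- IHa. destruct L as [|L']; [lia|].
    rewrite seq_S, ccount_app. simpl. rewrite (dec01_iff (P (S (a + L'))) (P a)).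
    + lia.
    + rewrite !HP. replace (S (a + L')) with (a + 1 * S L')%nat by lia. rewrite Nat.Div0.mod_add. tauto.
Qed.

Lemma cnt_mult k : cnt P (k * L) = (k * w)%nat.
Proof.
  induction k; [unfold cnt; simpl; lia|].
  replace (S k * L)%nat with (k * L + L)%nat by lia. rewrite cnt_add, IHk, window. lia.
Qed.

Lemma dens_periodic : dens P (INR w / INR L).
Proof.
  intros eps Heps. exists (2 * INR L). intros r.
  pose proof (Nat.div_mod_eq r L) as Er.
  set (k := (r / L)%nat) in *. set (s := (r mod L)%nat) in *.
  assert (Hs : (s < L)%nat) by (apply Nat.mod_upper_bound; lia).
  assert (Hc : cnt P r = (k * w + ccount P (seq (S (k * L)) s))%nat).
  { rewrite Er. replace (L * k + s)%nat with (k * L + s)%nat by lia. rewrite cnt_add, cnt_mult. reflexivity. }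
  pose proof (ccount_le_length P (seq (S (k * L)) s)) as He. rewrite length_seq in He.
  assert (Hw : (w <= L)%nat) by (unfold w; pose proof (ccount_le_length Pm (seq 0 L)); rewrite length_seq in H; auto).
  set (e := ccount P (seq (S (k * L)) s)) in *.
  rewrite Hc, Er. rewrite plus_INR, !mult_INR, plus_INR, mult_INR.
  assert (HL' : 0 < INR L) by (apply lt_0_INR; lia).
  replace (INR k * INR w + INR e - INR w / INR L * (INR L * INR k + INR s)) with (INR e - INR w * (INR s / INR L)) by (field; lra).
  apply le_INR in He. apply le_INR in Hw. apply lt_INR in Hs.
  assert (0 <= INR s / INR L <= 1).
  { split; [apply Rmult_le_pos; [apply pos_INR|left; apply Rinv_0_lt_compat; lra]|].
    apply Rmult_le_reg_r with (INR L); auto. unfold Rdiv. rewrite Rmult_assoc, Rinv_l; lra. }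
  pose proof (pos_INR e). pose proof (pos_INR w). pose proof (pos_INR (L * k + s)).
  assert (0 <= eps * INR (L * k + s)) by (apply Rmult_le_pos; lra).
  assert (0 <= INR w * (INR s / INR L) <= INR w) by (split; [apply Rmult_le_pos; lra|]; nra).
  assert (0 <= eps * (INR L * INR k + INR s)) by (apply Rmult_le_pos; [lra | pose proof (pos_INR L); pose proof (pos_INR k); pose proof (pos_INR s); nra]).
  apply Rabs_le; split; lra.
Qed.
End Periodic.

Lemma dens_zero_spacing P :
  (forall H : nat, (1 <= H)%nat -> exists N : nat, forall n n', (N <= n)%nat -> (n < n')%nat -> (n' <= n + H)%nat -> P n -> P n' -> False) ->
  dens P 0.
Proof.
  intros Hsp eps Heps.
  destruct (nat_above (1 / eps)) as [H0 HH0].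
  set (H := S H0).
  destruct (Hsp H ltac:(unfold H; lia)) as [N HN].
  assert (Claim : forall r, INR (cnt P r) <= INR (N + H + 1) + INR r / INR (S H)).
  { intros r. induction r as [r IH] using (well_founded_induction Wf_nat.lt_wf).
    assert (HSH : 0 < INR (S H)) by (apply lt_0_INR; lia).
    assert (0 <= INR r / INR (S H)) by (apply Rmult_le_pos; [apply pos_INR|left; apply Rinv_0_lt_compat; lra]).
    destruct (le_lt_dec r (N + H + 1)) as [h|h].
    - pose proof (cnt_le P r) as Hcl. apply le_INR in Hcl. apply le_INR in h. lra.
    - destruct r as [|r']; [lia|].
      destruct (classic (P (S r'))) as [Pr|Pr].
      + assert (Ecnt : cnt P (S r') = (cnt P (S r' - S H) + 1)%nat).
        { pose proof (cnt_add P (S r' - S H) (S H)) as E.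
          replace (S r' - S H + S H)%nat with (S r') in E by lia. rewrite E. f_equal.
          replace (S (S r' - S H)) with (S r' - H)%nat by lia.
          rewrite seq_S, ccount_app, ccount_zero.
          2:{ intros x Hx Px. apply in_seq in Hx. apply (HN x (S r')); auto; lia. }
          cbn [ccount].
          replace (S r' - H + H)%nat with (S r') by lia.
          rewrite dec01_true by auto. reflexivity. }
        rewrite Ecnt.
        specialize (IH (S r' - S H)%nat ltac:(lia)).
        rewrite !plus_INR. rewrite !plus_INR in IH.
        assert (E2 : INR (S r' - S H) = INR (S r') - INR (S H)) by (rewrite minus_INR by lia; reflexivity).
        rewrite E2 in IH.
        replace ((INR (S r') - INR (S H)) / INR (S H)) with (INR (S r') / INR (S H) - 1) in IH by (field; lra).
        simpl (INR 1) in *. lra.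
      + rewrite cnt_S, dec01_false by auto.
        specialize (IH r' ltac:(lia)).
        assert (INR r' / INR (S H) <= INR (S r') / INR (S H)).
        { apply Rmult_le_compat_r; [left; apply Rinv_0_lt_compat; lra|apply le_INR; lia]. }
        rewrite Nat.add_0_r. lra. }
  exists (INR (N + H + 1)). intros r. rewrite Rmult_0_l, Rminus_0_r, Rabs_right by (apply Rle_ge, pos_INR).
  eapply Rle_trans; [apply Claim|].
  assert (INR r / INR (S H) <= eps * INR r).
  { assert (HSH : 0 < INR (S H)) by (apply lt_0_INR; lia).
    assert (1 / eps < INR (S H)) by (unfold H; rewrite !S_INR; lra).
    assert (1 < eps * INR (S H)).
    { apply Rmult_lt_compat_l with (r := eps) in H1; auto.
      replace (eps * (1 / eps)) with 1 in H1 by (field; lra). lra. }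
    pose proof (pos_INR r).
    apply Rmult_le_reg_r with (INR (S H)); auto. unfold Rdiv. rewrite Rmult_assoc, Rinv_l by lra.
    nra. }
  lra.
Qed.


Close Scope R_scope.

Lemma In_tuples bs ws : In ws (tuples bs) <->
  length ws = length bs /\ forall j, (j < length bs)%nat -> (nth j ws 0 < nth j bs 0)%nat.
Proof.
  revert ws; induction bs as [|b bs IH]; intros ws; simpl.
  - split.
    + intros [<-|[]]. split; [reflexivity|intros; lia].
    + intros [H _]. destruct ws; [auto|simpl in H; lia].
  - rewrite in_flat_map. split.
    + intros [w [Hw Hin]]. apply in_map_iff in Hin. destruct Hin as [ws' [<- Hws']].
      apply IH in Hws'. apply in_seq in Hw. destruct Hws' as [H1 H2].
      simpl. split; [lia|]. intros [|j] Hj; simpl; [lia|apply H2; lia].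
    + intros [H1 H2]. destruct ws as [|w ws']; simpl in H1; [lia|].
      exists w. split.
      * apply in_seq. specialize (H2 0%nat ltac:(lia)). simpl in H2. lia.
      * apply in_map. apply IH. split; [lia|]. intros j Hj. apply (H2 (S j)). lia.
Qed.

Lemma NoDup_map_inj_on {A B} (f : A -> B) l :
  NoDup l -> (forall x y, In x l -> In y l -> f x = f y -> x = y) -> NoDup (map f l).
Proof.
  induction l; simpl; intros Hn Hi; [constructor|].
  inversion Hn; subst. constructor.
  - intros Hin. apply in_map_iff in Hin. destruct Hin as [y [Ey Hy]].
    assert (y = a) by (apply Hi; auto). subst; contradiction.
  - apply IHl; auto.
Qed.

Lemma NoDup_tuples bs : NoDup (tuples bs).
Proof.
  induction bs as [|b bs IH]; simpl.
  - constructor; [simpl; tauto|constructor].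
  - generalize 0%nat. induction b; intros s; simpl; [constructor|].
    apply NoDup_app.
    + apply NoDup_map_inj_on; auto. intros x y _ _ E; inversion E; auto.
    + apply IHb.
    + intros a Ha1 Ha2. apply in_map_iff in Ha1. destruct Ha1 as [w [<- _]].
      apply in_flat_map in Ha2. destruct Ha2 as [w' [Hw' Hin]]. apply in_seq in Hw'.
      apply in_map_iff in Hin. destruct Hin as [w'' [E _]]. inversion E. lia.
Qed.

Definition decb (P : Prop) : bool := if excluded_middle_informative P then true else false.

Lemma ccount_filter {A} (P : A -> Prop) l : ccount P l = length (filter (fun x => decb (P x)) l).
Proof.
  induction l; simpl; auto. rewrite IHl. unfold dec01.
  case_eq (decb (P a)); intros E; unfold decb in E;
  destruct (excluded_middle_informative (P a)); try discriminate; simpl; lia.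
Qed.

Lemma ccount_bij {A B} (P1 : A -> Prop) (P2 : B -> Prop) l1 l2 (f : A -> B) :
  NoDup l1 -> NoDup l2 ->
  (forall x, In x l1 -> P1 x -> In (f x) l2 /\ P2 (f x)) ->
  (forall x y, In x l1 -> In y l1 -> P1 x -> P1 y -> f x = f y -> x = y) ->
  (forall y, In y l2 -> P2 y -> exists x, In x l1 /\ P1 x /\ f x = y) ->
  ccount P1 l1 = ccount P2 l2.
Proof.
  intros N1 N2 Hmap Hinj Hsur. rewrite !ccount_filter.
  set (F1 := filter (fun x => decb (P1 x)) l1). set (F2 := filter (fun x => decb (P2 x)) l2).
  assert (HF1 : forall x, In x F1 <-> In x l1 /\ P1 x).
  { intros x. unfold F1. rewrite filter_In. unfold decb. destruct (excluded_middle_informative (P1 x)); intuition congruence. }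
  assert (HF2 : forall x, In x F2 <-> In x l2 /\ P2 x).
  { intros x. unfold F2. rewrite filter_In. unfold decb. destruct (excluded_middle_informative (P2 x)); intuition congruence. }
  assert (NF1 : NoDup F1) by (apply NoDup_filter; auto).
  assert (NF2 : NoDup F2) by (apply NoDup_filter; auto).
  assert (NM : NoDup (map f F1)).
  { apply NoDup_map_inj_on; auto. intros x y Hx Hy. apply HF1 in Hx. apply HF1 in Hy. apply Hinj; tauto. }
  apply Nat.le_antisymm.
  - rewrite <- (length_map f F1). apply NoDup_incl_length; auto.
    intros y Hy. apply in_map_iff in Hy. destruct Hy as [x [<- Hx]]. apply HF1 in Hx. apply HF2. apply Hmap; tauto.
  - rewrite <- (length_map f F1). apply NoDup_incl_length; auto.
    intros y Hy. apply HF2 in Hy. destruct (Hsur y) as [x [Hx [Px Ex]]]; try tauto.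
    apply in_map_iff. exists x. split; auto. apply HF1; auto.
Qed.

Lemma lcm_list_pos l : (forall a, In a l -> (0 < a)%nat) -> (0 < lcm_list l)%nat.
Proof.
  induction l; simpl; intros H; [lia|].
  assert (0 < a)%nat by auto. assert (0 < lcm_list l)%nat by auto.
  destruct (Nat.eq_dec (Nat.lcm a (lcm_list l)) 0) as [E|E]; [|lia].
  apply Nat.lcm_eq_0 in E. lia.
Qed.

Lemma lcm_list_dvd l a : In a l -> Nat.divide a (lcm_list l).
Proof.
  induction l; simpl; [tauto|]. intros [E|E].
  - subst. apply Nat.divide_lcm_l.
  - eapply Nat.divide_trans; [apply IHl; auto|apply Nat.divide_lcm_r].
Qed.

Lemma lcm_list_least l d : (forall a, In a l -> Nat.divide a d) -> Nat.divide (lcm_list l) d.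
Proof.
  induction l; simpl; intros H.
  - apply Nat.divide_1_l.
  - apply Nat.lcm_least; auto.
Qed.


From Stdlib Require Import Znumtheory.

Lemma map_nth_lt {A B} (f : A -> B) l j d d0 : (j < length l)%nat -> nth j (map f l) d = f (nth j l d0).
Proof.
  revert j; induction l; simpl; intros j H; [lia|]. destruct j; auto. apply IHl; lia.
Qed.

Section CRT.
Variables (u : nat) (al be : nat -> nat) (x : nat -> R).
Hypotheses (Hal : forall i, (2 <= i <= u)%nat -> (0 < al i)%nat).

Let is := idx2 u.
Let bs := map al is.
Definition LL := lcm_list (map al (idx2 u)).
Definition phi (w : nat) : list nat := map (fun i => (w mod al i)%nat) (idx2 u).

Lemma In_is i : In i is <-> (2 <= i <= u)%nat.
Proof. unfold is, idx2. rewrite in_seq. lia. Qed.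

Lemma len_is : length is = (u - 1)%nat.
Proof. unfold is, idx2. rewrite length_seq; auto. Qed.

Lemma nth_is j : (j < u - 1)%nat -> nth j is 0%nat = (2 + j)%nat.
Proof. intros; unfold is, idx2. rewrite seq_nth; auto. Qed.

Lemma LL_pos : (0 < LL)%nat.
Proof.
  apply lcm_list_pos. intros a Ha. apply in_map_iff in Ha. destruct Ha as [i [<- Hi]].
  apply Hal. apply In_is; auto.
Qed.

Lemma al_dvd_LL i : (2 <= i <= u)%nat -> Nat.divide (al i) LL.
Proof. intros H. apply lcm_list_dvd. apply in_map. apply In_is; auto. Qed.

Lemma nth_phi w j : (j < u - 1)%nat -> nth j (phi w) 0%nat = (w mod al (2 + j))%nat.
Proof.
  intros H. unfold phi. rewrite (map_nth_lt _ _ _ _ 0%nat); [|fold is; rewrite len_is; auto].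
  fold is. rewrite nth_is; auto.
Qed.

Lemma nth_bs j : (j < u - 1)%nat -> nth j bs 0%nat = al (2 + j).
Proof.
  intros H. unfold bs. rewrite (map_nth_lt _ _ _ _ 0%nat); [|rewrite len_is; auto]. rewrite nth_is; auto.
Qed.

Lemma len_phi w : length (phi w) = (u - 1)%nat.
Proof. unfold phi. rewrite length_map. fold is. apply len_is. Qed.

Lemma len_bs : length bs = (u - 1)%nat.
Proof. unfold bs. rewrite length_map. apply len_is. Qed.

Lemma phi_tuple w : In (phi w) (tuples bs).
Proof.
  apply In_tuples. rewrite len_phi, len_bs. split; auto. intros j Hj.
  rewrite nth_phi, nth_bs by auto. apply Nat.mod_upper_bound. specialize (Hal (2 + j) ltac:(lia)). lia.
Qed.

Lemma wcomp_phi w i : (2 <= i <= u)%nat -> wcomp (phi w) i = (w mod al i)%nat.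
Proof.
  intros H. unfold wcomp. rewrite nth_phi by lia. f_equal. f_equal. lia.
Qed.

Lemma inV_phi w : inV u al (phi w).
Proof.
  intros i j Hi Hj. rewrite !wcomp_phi by auto.
  pose proof (Nat.div_mod_eq w (al i)) as Ei. pose proof (Nat.div_mod_eq w (al j)) as Ej.
  exists (w / al j + al i)%nat, (w / al i + al j)%nat. split; [|split].
  - pose proof (Hal i Hi). lia.
  - pose proof (Hal j Hj). lia.
  - rewrite !Nat2Z.inj_mul, !Nat2Z.inj_add.
    assert (Z.of_nat w = (Z.of_nat (al i) * Z.of_nat (w / al i) + Z.of_nat (w mod al i))%Z) by (rewrite <- Nat2Z.inj_mul, <- Nat2Z.inj_add; congruence).
    assert (Z.of_nat w = (Z.of_nat (al j) * Z.of_nat (w / al j) + Z.of_nat (w mod al j))%Z) by (rewrite <- Nat2Z.inj_mul, <- Nat2Z.inj_add; congruence).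
    lia.
Qed.

Lemma mod_eq_dvd a w w' : (0 < a)%nat -> (w <= w')%nat -> (w mod a = w' mod a)%nat -> Nat.divide a (w' - w).
Proof.
  intros Ha Hle E.
  pose proof (Nat.div_mod_eq w a) as Ew. pose proof (Nat.div_mod_eq w' a) as Ew'.
  exists (w' / a - w / a)%nat. rewrite Nat.mul_sub_distr_r. nia.
Qed.

Lemma phi_inj_le w w' : (w < LL)%nat -> (w' < LL)%nat -> (w <= w')%nat ->
  (forall i, (2 <= i <= u)%nat -> (w mod al i = w' mod al i)%nat) -> w = w'.
Proof.
  intros H1 H2 Hle Hm.
  assert (HD : Nat.divide LL (w' - w)).
  { unfold LL. apply lcm_list_least. intros a Ha. apply in_map_iff in Ha. destruct Ha as [i [<- Hi]].
    apply In_is in Hi. apply mod_eq_dvd; auto. }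
  destruct HD as [k Hk]. destruct k; lia.
Qed.

Lemma phi_inj w w' : (w < LL)%nat -> (w' < LL)%nat -> phi w = phi w' -> w = w'.
Proof.
  intros H1 H2 E.
  assert (Hm : forall i, (2 <= i <= u)%nat -> (w mod al i = w' mod al i)%nat).
  { intros i Hi. rewrite <- !wcomp_phi by auto. rewrite E; auto. }
  destruct (le_lt_dec w w') as [h|h]; [apply phi_inj_le; auto|].
  symmetry; apply phi_inj_le; auto; [lia|intros; symmetry; auto].
Qed.

Lemma phi_sur ws : In ws (tuples bs) -> inV u al ws -> exists w, (w < LL)%nat /\ phi w = ws.
Proof.
  intros Hws HV. apply In_tuples in Hws. destruct Hws as [Hlen Hlt]. rewrite len_bs in Hlen, Hlt.
  set (l := map (fun i => (Z.of_nat (al i), Z.of_nat (wcomp ws i))) is).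
  destruct (crt_list l) as [z Hz].
  - intros p Hp. unfold l in Hp. apply in_map_iff in Hp. destruct Hp as [i [<- Hi]]. apply In_is in Hi.
    simpl. specialize (Hal i Hi). lia.
  - intros p q Hp Hq. unfold l in Hp, Hq. apply in_map_iff in Hp. apply in_map_iff in Hq.
    destruct Hp as [i [<- Hi]]. destruct Hq as [j [<- Hj]]. apply In_is in Hi. apply In_is in Hj. simpl.
    destruct (HV i j Hi Hj) as [a [b [_ [_ Hab]]]]. rewrite Hab. rewrite !Nat2Z.inj_mul.
    apply Z.divide_sub_r.
    + apply Z.divide_mul_l. apply Z.gcd_divide_r.
    + apply Z.divide_mul_l. apply Z.gcd_divide_l.
  - pose proof LL_pos as HL.
    exists (Z.to_nat (z mod Z.of_nat LL)).
    pose proof (Z.mod_pos_bound z (Z.of_nat LL) ltac:(lia)) as Hb.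
    split; [lia|].
    apply nth_ext with 0%nat 0%nat; [rewrite len_phi; lia|].
    intros j Hj. rewrite len_phi in Hj. rewrite nth_phi by auto.
    replace (nth j ws 0%nat) with (wcomp ws (2 + j)) by (unfold wcomp; f_equal; lia).
    specialize (Hlt j Hj). rewrite nth_bs in Hlt by auto.
    replace (nth j ws 0%nat) with (wcomp ws (2 + j)) in Hlt by (unfold wcomp; f_equal; lia).
    assert (Ha : (0 < al (2 + j))%nat) by (apply Hal; lia).
    assert (Hzd : (Z.of_nat (al (2 + j)) | z - Z.of_nat (wcomp ws (2 + j)))%Z).
    { apply (Hz (Z.of_nat (al (2 + j)), Z.of_nat (wcomp ws (2 + j)))). unfold l. apply in_map_iff.
      exists (2 + j)%nat. split; auto. apply In_is. lia. }
    assert (HdL : (Z.of_nat (al (2 + j)) | Z.of_nat LL)%Z) by (apply Zdiv_nat, al_dvd_LL; lia).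
    apply Nat2Z.inj. rewrite Nat2Z.inj_mod, Z2Nat.id by lia.
    rewrite <- Zmod_div_mod by (auto; lia).
    destruct Hzd as [k Hk]. replace z with (Z.of_nat (wcomp ws (2 + j)) + k * Z.of_nat (al (2 + j)))%Z by lia.
    rewrite Z.mod_add by lia. apply Z.mod_small. lia.
Qed.

Definition Pm (w : nat) : Prop := forall i, (2 <= i <= u)%nat -> inW (al i) (be i) (x i) (w mod al i)%nat.

Lemma crt_count : ccount Pm (seq 0 LL) = Mformula u al be x.
Proof.
  unfold Mformula. fold is. fold bs.
  apply ccount_bij with (f := phi).
  - apply seq_NoDup.
  - apply NoDup_tuples.
  - intros w Hw Pw. split; [apply phi_tuple|]. split; [|apply inV_phi].
    intros i Hi. rewrite wcomp_phi; auto.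
  - intros w w' Hw Hw' _ _ E. apply in_seq in Hw. apply in_seq in Hw'. apply phi_inj; auto; lia.
  - intros ws Hws [HW HV]. destruct (phi_sur ws Hws HV) as [w [Hw E]].
    exists w. split; [apply in_seq; lia|]. split; auto.
    intros i Hi. rewrite <- wcomp_phi by auto. rewrite E. auto.
Qed.

Lemma Mformula_le : (Mformula u al be x <= LL)%nat.
Proof. rewrite <- crt_count. pose proof (ccount_le_length Pm (seq 0 LL)). rewrite length_seq in H. auto. Qed.

End CRT.


Open Scope R_scope.

Definition notint (x : R) : Prop := forall z : Z, x <> IZR z.

Lemma notint_dist x : notint x -> exists d, 0 < d /\ forall z : Z, d <= Rabs (x - IZR z).
Proof.
  intros H. destruct (archimed x) as [H1 H2].
  set (f := (up x - 1)%Z).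
  assert (Hf1 : IZR f <= x) by (unfold f; rewrite minus_IZR; simpl; lra).
  assert (Hf2 : x < IZR f + 1) by (unfold f; rewrite minus_IZR; simpl; lra).
  assert (Hf3 : IZR f < x) by (destruct (Req_dec (IZR f) x) as [E|E]; [exfalso; apply (H f); auto|lra]).
  exists (Rmin (x - IZR f) (IZR f + 1 - x)). split; [apply Rmin_case; lra|].
  intros z. destruct (Z_le_gt_dec z f) as [h|h].
  - apply IZR_le in h. rewrite Rabs_right by lra. pose proof (Rmin_l (x - IZR f) (IZR f + 1 - x)). lra.
  - assert (h' : (f + 1 <= z)%Z) by lia. apply IZR_le in h'. rewrite plus_IZR in h'. simpl in h'.
    rewrite Rabs_left1 by lra. pose proof (Rmin_r (x - IZR f) (IZR f + 1 - x)). lra.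
Qed.

Lemma dist_finite (xs : list R) : exists d, 0 < d /\ forall x, In x xs -> notint x -> forall z : Z, d <= Rabs (x - IZR z).
Proof.
  induction xs as [|a xs [d [Hd IH]]].
  - exists 1; split; [lra|simpl; tauto].
  - destruct (classic (notint a)) as [Ha|Ha].
    + destruct (notint_dist a Ha) as [d' [Hd' H']].
      exists (Rmin d d'). split; [apply Rmin_case; lra|]. intros x [E|E] Hx z.
      * subst. pose proof (Rmin_r d d'). specialize (H' z). lra.
      * pose proof (Rmin_l d d'). specialize (IH x E Hx z). lra.
    + exists d; split; auto. intros x [E|E] Hx z; [subst; contradiction|auto].
Qed.

Lemma int_small (w : Z) : Rabs (IZR w) < 1 -> w = 0%Z.
Proof.
  intros H. apply Rabs_def2 in H. destruct H as [H1 H2].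
  assert (-1 < w)%Z by (apply lt_IZR; simpl; lra). assert (w < 1)%Z by (apply lt_IZR; simpl; lra). lia.
Qed.

Definition sol (Q P : list R) (n : nat) : Prop :=
  exists l : nat, (1 <= l)%nat /\ peval Q (INR l) = peval P (INR n).

Lemma real_to_nat_bound (N : R) : exists N' : nat, forall n : nat, (N' <= n)%nat -> N <= INR n.
Proof.
  destruct (nat_above N) as [N' HN']. exists N'. intros n Hn. apply le_INR in Hn. lra.
Qed.

Section Pair.
Variables (P Q : list R) (m : nat).
Hypotheses (HP : has_degree P m) (HQ : has_degree Q m) (Hm : (1 <= m)%nat)
  (HaP : 0 < nth m P 0) (HaQ : 0 < nth m Q 0).
Let c := cfac P Q m.
Let d := dfac P Q m.

Lemma pair_irrational : (forall h : nat, (1 <= h)%nat -> notint (c * INR h)) -> dens (sol Q P) 0.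
Proof.
  intros Hirr. apply dens_zero_spacing. intros H HH.
  destruct (dist_finite (map (fun h => c * INR h) (seq 1 H))) as [del [Hdel Hd]].
  destruct (key_approx P Q m HP HQ Hm HaP HaQ (del / 3) ltac:(lra)) as [N HN].
  destruct (real_to_nat_bound N) as [N' HN'].
  exists N'. intros n n' Hn Hnn' Hn'H [l [Hl El]] [l' [Hl' El']].
  assert (A1 : Rabs (INR l - c * INR n - d) < del / 3) by (apply HN; auto; apply (le_INR 1); auto).
  assert (A2 : Rabs (INR l' - c * INR n' - d) < del / 3) by (apply HN; auto; [apply HN'; lia|apply (le_INR 1); auto]).
  set (h := (n' - n)%nat).
  assert (Hx : In (c * INR h) (map (fun h => c * INR h) (seq 1 H))).
  { apply (in_map (fun h0 => c * INR h0)). apply in_seq. unfold h. lia. }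
  specialize (Hd _ Hx (Hirr h ltac:(unfold h; lia)) (Z.of_nat l' - Z.of_nat l)%Z).
  rewrite minus_IZR, <- !INR_IZR_INZ in Hd.
  assert (Eh : INR h = INR n' - INR n) by (unfold h; rewrite minus_INR by lia; reflexivity).
  rewrite Eh in Hd.
  apply Rabs_def2 in A1. apply Rabs_def2 in A2.
  assert (Rabs (c * (INR n' - INR n) - (INR l' - INR l)) < del) by (apply Rabs_def1; lra).
  lra.
Qed.

Lemma is_rat_IZR z : is_rat (IZR z).
Proof. exists z, 1%Z. split; [lia|]. simpl. field. Qed.
Lemma is_rat_INR n : is_rat (INR n).
Proof. rewrite INR_IZR_INZ. apply is_rat_IZR. Qed.
Lemma is_rat_minus a b : is_rat a -> is_rat b -> is_rat (a - b).
Proof.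
  intros [p1 [r1 [H1 E1]]] [p2 [r2 [H2 E2]]]. exists (p1 * r2 - p2 * r1)%Z, (r1 * r2)%Z. split; [lia|].
  subst. rewrite minus_IZR, !mult_IZR. field. split; apply not_0_IZR; auto.
Qed.
Lemma is_rat_mult a b : is_rat a -> is_rat b -> is_rat (a * b).
Proof.
  intros [p1 [r1 [H1 E1]]] [p2 [r2 [H2 E2]]]. exists (p1 * p2)%Z, (r1 * r2)%Z. split; [lia|].
  subst. rewrite !mult_IZR. field. split; apply not_0_IZR; auto.
Qed.

Lemma rat_denom (x : R) : is_rat x -> exists (a : nat) (b : Z), (1 <= a)%nat /\ x * INR a = IZR b.
Proof.
  intros [p [r [Hr E]]]. exists (Z.abs_nat r), (p * Z.sgn r)%Z. split; [lia|].
  rewrite INR_IZR_INZ, Nat2Z.inj_abs_nat. subst.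
  destruct (Z_lt_le_dec 0 r) as [h|h].
  - rewrite Z.abs_eq, Z.sgn_pos by lia. rewrite Z.mul_1_r. field. apply not_0_IZR; lia.
  - rewrite Z.abs_neq, Z.sgn_neg by lia. rewrite opp_IZR, mult_IZR. simpl. field. apply not_0_IZR; lia.
Qed.

Lemma pair_rational_noshift :
  is_rat c -> ~ (exists e, is_rat e /\ forall z, peval Q (c * z + e) = peval P z) ->
  exists N : nat, forall n, (N <= n)%nat -> ~ sol Q P n.
Proof.
  intros Hc NS.
  destruct (rat_denom c Hc) as [al [be [Hal Hab]]].
  destruct (dist_finite (map (fun s => c * INR s + d) (seq 0 al))) as [del [Hdel Hd]].
  set (del' := Rmin del (1/2)).
  assert (Hdel' : 0 < del') by (unfold del'; apply Rmin_case; lra).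
  assert (Hdd : del' <= del) by apply Rmin_l.
  assert (Hdh : del' <= 1/2) by apply Rmin_r.
  destruct (key_approx P Q m HP HQ Hm HaP HaQ del' Hdel') as [N1 HN1].
  assert (Claim : forall n : nat, N1 <= INR n -> sol Q P n ->
            is_rat d /\ peval Q (c * INR n + d) = peval P (INR n)).
  { intros n Hn [l [Hl E]].
    assert (A : Rabs (INR l - c * INR n - d) < del') by (apply HN1; auto; apply (le_INR 1); auto).
    pose proof (Nat.div_mod_eq n al) as En.
    set (k := (n / al)%nat) in *. set (s := (n mod al)%nat) in *.
    assert (Hs : (s < al)%nat) by (apply Nat.mod_upper_bound; lia).
    assert (Ecn : c * INR n = IZR be * INR k + c * INR s).
    { rewrite En, plus_INR, mult_INR, <- Hab. ring. }
    assert (Hx : In (c * INR s + d) (map (fun s => c * INR s + d) (seq 0 al))).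
    { apply (in_map (fun s0 => c * INR s0 + d)). apply in_seq. lia. }
    destruct (classic (notint (c * INR s + d))) as [Hni|Hni].
    - exfalso. specialize (Hd _ Hx Hni (Z.of_nat l - be * Z.of_nat k)%Z).
      rewrite minus_IZR, mult_IZR, <- !INR_IZR_INZ in Hd.
      replace (c * INR s + d - (INR l - IZR be * INR k)) with (- (INR l - c * INR n - d)) in Hd by (rewrite Ecn; ring).
      rewrite Rabs_Ropp in Hd. lra.
    - unfold notint in Hni. apply not_all_ex_not in Hni. destruct Hni as [z0 Hz0].
      apply NNPP in Hz0.
      assert (Ew : INR l - c * INR n - d = IZR (Z.of_nat l - be * Z.of_nat k - z0)).
      { rewrite !minus_IZR, mult_IZR, <- !INR_IZR_INZ. rewrite Ecn, <- Hz0. ring. }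
      rewrite Ew in A. assert (Rabs (IZR (Z.of_nat l - be * Z.of_nat k - z0)) < 1) by lra.
      apply int_small in H. rewrite H in Ew. simpl in Ew.
      split.
      + replace d with (IZR z0 - c * INR s) by lra. apply is_rat_minus; [apply is_rat_IZR|apply is_rat_mult; auto; apply is_rat_INR].
      + replace (c * INR n + d) with (INR l) by lra. auto. }
  destruct (poly_diff_ev P Q c d) as [Hid|[N2 HN2]].
  - destruct (real_to_nat_bound N1) as [N HN]. exists N. intros n Hn Hsol.
    destruct (Claim n (HN n Hn) Hsol) as [Hr _]. apply NS. exists d. split; auto.
  - destruct (real_to_nat_bound (Rmax N1 N2)) as [N HN]. exists N. intros n Hn Hsol.
    specialize (HN n Hn).
    destruct (Claim n ltac:(pose proof (Rmax_l N1 N2); lra) Hsol) as [_ E].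
    apply (HN2 (INR n)); auto. pose proof (Rmax_r N1 N2); lra.
Qed.

Lemma pair_shift e : (forall z, peval Q (c * z + e) = peval P z) ->
  exists N : nat, forall n, (N <= n)%nat -> (sol Q P n <-> exists z : Z, IZR z = c * INR n + e).
Proof.
  intros Hid.
  pose proof (cfac_pos P Q m) as Hc. fold c in Hc.
  destruct (eventually_incr P m HP Hm HaP) as [X [HX1 HX]].
  set (Y := Rmax 1 (c * X + e)).
  destruct (poly_big m Hm P HP HaP (pabs Q Y + 1)) as [N1 HN1].
  destruct (real_to_nat_bound (Rmax (Rmax N1 X) ((1 + Rabs e) / c))) as [N HN].
  exists N. intros n Hn. specialize (HN n Hn).
  assert (H1 : N1 <= INR n) by (pose proof (Rmax_l N1 X); pose proof (Rmax_l (Rmax N1 X) ((1 + Rabs e) / c)); lra).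
  assert (H2 : X <= INR n) by (pose proof (Rmax_r N1 X); pose proof (Rmax_l (Rmax N1 X) ((1 + Rabs e) / c)); lra).
  assert (H3 : (1 + Rabs e) / c <= INR n) by (pose proof (Rmax_r (Rmax N1 X) ((1 + Rabs e) / c)); lra).
  split.
  - intros [l [Hl E]]. exists (Z.of_nat l). rewrite <- INR_IZR_INZ.
    assert (HlY : Y < INR l).
    { destruct (Rlt_or_le Y (INR l)) as [h|h]; auto. exfalso.
      pose proof (peval_bound Q Y (INR l) (pos_INR l) h) as Hb. rewrite E in Hb.
      specialize (HN1 (INR n) H1). pose proof (Rle_abs (peval P (INR n))). lra. }
    assert (Hle : X <= (INR l - e) / c).
    { assert (c * X + e < INR l) by (unfold Y in HlY; pose proof (Rmax_r 1 (c * X + e)); lra).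
      apply Rmult_le_reg_l with c; auto. replace (c * ((INR l - e) / c)) with (INR l - e) by (field; lra). lra. }
    assert (EP : peval P ((INR l - e) / c) = peval P (INR n)).
    { rewrite <- Hid. replace (c * ((INR l - e) / c) + e) with (INR l) by (field; lra). auto. }
    destruct (Rtotal_order ((INR l - e) / c) (INR n)) as [h|[h|h]].
    + pose proof (HX _ _ Hle h). lra.
    + rewrite <- h. field. lra.
    + pose proof (HX _ _ H2 h). lra.
  - intros [z Hz].
    assert (Hz1 : 1 <= IZR z).
    { rewrite Hz. apply Rmult_le_compat_l with (r := c) in H3; [|lra].
      replace (c * ((1 + Rabs e) / c)) with (1 + Rabs e) in H3 by (field; lra).
      pose proof (Rle_abs (- e)). rewrite Rabs_Ropp in H. lra. }
    assert (Hz0 : (1 <= z)%Z) by (apply le_IZR; auto).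
    exists (Z.to_nat z). split; [lia|].
    rewrite INR_IZR_INZ, Z2Nat.id by lia. rewrite Hz. apply Hid.
Qed.

End Pair.

Lemma shift_periodic (a b : nat) (e : R) (n : nat) : (0 < a)%nat -> (0 < b)%nat ->
  ((exists z : Z, IZR z = INR b / INR a * INR n + e) <-> inW a b e (n mod a)).
Proof.
  intros Ha Hb.
  assert (Ha' : 0 < INR a) by (apply lt_0_INR; auto). assert (Hb' : 0 < INR b) by (apply lt_0_INR; auto).
  pose proof (Nat.div_mod_eq n a) as En.
  assert (Ew : INR n = INR a * INR (n / a) + INR (n mod a)) by (rewrite En at 1; rewrite plus_INR, mult_INR; auto).
  split.
  - intros [z Hz]. split; [apply Nat.mod_upper_bound; lia|].
    exists (z - Z.of_nat b * Z.of_nat (n / a))%Z. rewrite minus_IZR, mult_IZR, <- !INR_IZR_INZ, Hz, Ew.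
    field. lra.
  - intros [_ [z Hz]]. exists (z + Z.of_nat b * Z.of_nat (n / a))%Z.
    rewrite plus_IZR, mult_IZR, <- !INR_IZR_INZ, Ew, Hz. field. lra.
Qed.


Lemma has_card_exists (S : R -> Prop) (L : list R) : (forall z, S z -> In z L) -> exists n, has_card S n.
Proof.
  intros H. set (L' := filter (fun z => decb (S z)) (nodup Req_dec_T L)).
  exists (length L'). exists L'. split; [|split; [reflexivity|]].
  - apply NoDup_filter, NoDup_nodup.
  - intros z. unfold L'. rewrite filter_In. unfold decb.
    destruct (excluded_middle_informative (S z)); split; intros Hz.
    + exact s.
    + split; auto; apply nodup_In; auto.
    + destruct Hz; discriminate.
    + contradiction.
Qed.

Lemma has_card_unique S n n' : has_card S n -> has_card S n' -> n = n'.
Proof.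
  intros [l [N1 [L1 H1]]] [l' [N2 [L2 H2]]]. subst.
  apply Nat.le_antisymm; apply NoDup_incl_length; auto; intros z Hz.
  - apply H2, H1; auto.
  - apply H1, H2; auto.
Qed.

Lemma z2n_neg k : (k < 0)%Z -> Z.to_nat k = 0%nat.
Proof. intros; destruct k; try lia; reflexivity. Qed.

Definition nfloor (x : R) : nat := Z.to_nat (up x - 1).

Lemma nfloor_le x : INR (nfloor x) <= Rmax x 0.
Proof.
  unfold nfloor. destruct (archimed x) as [H1 H2].
  destruct (Z_lt_le_dec (up x - 1) 0) as [h|h].
  - rewrite z2n_neg by lia. simpl. apply Rmax_r.
  - rewrite INR_IZR_INZ, Z2Nat.id by lia. rewrite minus_IZR. simpl.
    pose proof (Rmax_l x 0). lra.
Qed.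

Lemma nfloor_gt x : x - 1 < INR (nfloor x).
Proof.
  unfold nfloor. destruct (archimed x) as [H1 H2].
  destruct (Z_lt_le_dec (up x - 1) 0) as [h|h].
  - rewrite z2n_neg by lia. simpl.
    assert (up x <= 0)%Z by lia. apply IZR_le in H. simpl in H. lra.
  - rewrite INR_IZR_INZ, Z2Nat.id by lia. rewrite minus_IZR. simpl. lra.
Qed.

Lemma nat_le_nfloor x n : 0 <= x -> (INR n <= x <-> (n <= nfloor x)%nat).
Proof.
  intros Hx. unfold nfloor. destruct (archimed x) as [H1 H2].
  assert (Hu0 : (0 < up x)%Z) by (apply lt_IZR; simpl; lra).
  split.
  - intros Hn. assert (Z.of_nat n < up x)%Z.
    { apply lt_IZR. rewrite <- INR_IZR_INZ. lra. }
    lia.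
  - intros Hn. assert (Z.of_nat n <= up x - 1)%Z by lia. apply IZR_le in H.
    rewrite <- INR_IZR_INZ, minus_IZR in H. simpl in H. lra.
Qed.

Lemma ccount_in_list (l l' : list nat) : NoDup l -> (ccount (fun n => In n l') l <= length l')%nat.
Proof.
  intros N. rewrite ccount_filter. apply NoDup_incl_length; [apply NoDup_filter; auto|].
  intros z Hz. apply filter_In in Hz. destruct Hz as [_ Hz]. unfold decb in Hz.
  destruct (excluded_middle_informative (In z l')); auto; discriminate.
Qed.

Lemma window_count (a w : R) (l : list nat) : NoDup l -> 0 <= w ->
  INR (ccount (fun n => a < INR n < a + w) l) <= w + 2.
Proof.
  intros N Hw.
  set (k := nfloor a). set (j := (nfloor w + 2)%nat).
  assert (Hsub : forall n, a < INR n < a + w -> In n (seq k j)).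
  { intros n [Hn1 Hn2]. apply in_seq.
    pose proof (nfloor_le a) as Ka. pose proof (nfloor_gt a) as Kb. pose proof (nfloor_gt w) as Kw.
    fold k in Ka, Kb. split.
    - destruct (le_lt_dec k n) as [h|h]; auto. exfalso.
      apply lt_INR in h. unfold Rmax in Ka. destruct (Rle_dec a 0).
      + pose proof (pos_INR n). lra.
      + assert (INR n + 1 <= INR k) by (rewrite <- S_INR; apply le_INR; apply INR_lt in h; lia). lra.
    - unfold j. apply INR_lt. rewrite !plus_INR. simpl.
      assert (a < INR k + 1).
      { unfold Rmax in Ka. destruct (Rle_dec a 0); lra. }
      lra. }
  eapply Rle_trans.
  - apply le_INR. eapply Nat.le_trans; [apply ccount_mono; intros n _ Hn; apply Hsub; exact Hn|].
    apply ccount_in_list; auto.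
  - rewrite length_seq. unfold j. rewrite plus_INR. simpl.
    pose proof (nfloor_le w). unfold Rmax in H. destruct (Rle_dec w 0); lra.
Qed.

Lemma ccount_disagree {A} (P P' E : A -> Prop) l : (forall x, In x l -> P x -> P' x \/ E x) ->
  (ccount P l <= ccount P' l + ccount E l)%nat.
Proof.
  induction l; simpl; intros H; [lia|].
  assert (dec01 (P a) <= dec01 (P' a) + dec01 (E a))%nat.
  { unfold dec01. destruct (excluded_middle_informative (P a)); [|lia].
    destruct (H a (or_introl eq_refl) p); [destruct (excluded_middle_informative (P' a)); [lia|contradiction]|].
    destruct (excluded_middle_informative (E a)); [lia|contradiction]. }
  assert (ccount P l <= ccount P' l + ccount E l)%nat by (apply IHl; intros; apply H; auto). lia.
Qed.

Lemma ccount_or {A} (E1 E2 : A -> Prop) l : (ccount (fun x => E1 x \/ E2 x) l <= ccount E1 l + ccount E2 l)%nat.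
Proof.
  pose proof (ccount_disagree (fun x => E1 x \/ E2 x) E1 E2 l). apply H. intros; tauto.
Qed.

Lemma approx_ev_close y y' rho (R1 : nat) B :
  (forall r, (R1 <= r)%nat -> Rabs (y r - y' r) <= B) -> approx y rho -> approx y' rho.
Proof.
  intros H A.
  set (M := fold_right Rplus 0 (map (fun r => Rabs (y r - y' r)) (seq 0 R1))).
  assert (HM : forall r, (r < R1)%nat -> Rabs (y r - y' r) <= M).
  { intros r Hr. unfold M.
    assert (Hin : In r (seq 0 R1)) by (apply in_seq; lia).
    generalize (seq 0 R1) Hin. induction l; simpl; [tauto|].
    assert (forall l, 0 <= fold_right Rplus 0 (map (fun r => Rabs (y r - y' r)) l)).
    { induction l0; simpl; [lra|]. pose proof (Rabs_pos (y a0 - y' a0)). lra. }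
    intros [E|E]; [subst; specialize (H0 l); lra|]. specialize (IHl E).
    pose proof (Rabs_pos (y a - y' a)). lra. }
  apply approx_close with (y := y) (B := Rabs B + Rabs M); auto.
  intros r. destruct (le_lt_dec R1 r) as [h|h].
  - specialize (H r h). pose proof (Rle_abs B). pose proof (Rabs_pos M). lra.
  - specialize (HM r h). pose proof (Rle_abs M). pose proof (Rabs_pos B). lra.
Qed.

Lemma ccount_cnt_seq0 (G : nat -> Prop) s B : (s < B)%nat ->
  ccount (fun n => G n /\ (1 <= n)%nat /\ (n <= s)%nat) (seq 0 B) = cnt G s.
Proof.
  intros H. unfold cnt.
  replace B with (1 + s + (B - 1 - s))%nat by lia.
  rewrite !seq_app, !ccount_app. simpl.
  rewrite dec01_false by lia.
  rewrite (ccount_zero _ (seq (S s) _)) by (intros x Hx; apply in_seq in Hx; lia).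
  rewrite (ccount_ext _ G (seq 1 s)) by (intros x Hx; apply in_seq in Hx; split; [tauto|intros; repeat split; auto; lia]).
  lia.
Qed.


Section Part3.
Variables (P Q1 : list R) (m : nat) (R0 : R) (G : nat -> Prop) (rho : R) (SS : R -> Prop).
Hypotheses (HP : has_degree P m) (HQ : has_degree Q1 m) (Hm : (1 <= m)%nat)
  (HaP : 0 < nth m P 0) (HaQ : 0 < nth m Q1 0)
  (Hinc : forall x y, R0 <= x -> x < y -> peval Q1 x < peval Q1 y)
  (HG : dens G rho)
  (HS : forall z, SS z <-> R0 <= z /\ exists n : nat, (1 <= n)%nat /\ peval Q1 z = peval P (INR n) /\ G n).

Let c1 := cfac P Q1 m.
Let d1 := dfac P Q1 m.
Let R0' := Rmax R0 1.

Lemma q1inj x y : R0 <= x -> R0 <= y -> peval Q1 x = peval Q1 y -> x = y.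
Proof.
  intros Hx Hy E. destruct (Rtotal_order x y) as [h|[h|h]]; auto.
  - pose proof (Hinc x y Hx h). lra.
  - pose proof (Hinc y x Hy h). lra.
Qed.

Definition zz (n : nat) : R := epsilon (inhabits 0) (fun z => R0' <= z /\ peval Q1 z = peval P (INR n)).

Lemma zz_spec n : (exists z, R0' <= z /\ peval Q1 z = peval P (INR n)) -> R0' <= zz n /\ peval Q1 (zz n) = peval P (INR n).
Proof. intros H. unfold zz. apply (epsilon_spec (inhabits 0) (fun z => R0' <= z /\ peval Q1 z = peval P (INR n))). auto. Qed.

Lemma R0'_ge : R0 <= R0' /\ 1 <= R0'.
Proof. unfold R0'. split; [apply Rmax_l|apply Rmax_r]. Qed.

Lemma zz_eq z n : R0' <= z -> peval Q1 z = peval P (INR n) -> zz n = z.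
Proof.
  intros Hz E. destruct (zz_spec n) as [H1 H2]; [exists z; auto|].
  destruct R0'_ge. apply q1inj; lra.
Qed.

Lemma finite_Sr r : exists l, NoDup l /\ forall z, In z l <-> (SS z /\ 1 <= z <= INR r).
Proof.
  destruct (poly_big m Hm P HP HaP (pabs Q1 (INR r) + 1)) as [Nr HNr].
  destruct (real_to_nat_bound Nr) as [Nr' HNr'].
  destruct (has_card_exists (fun z => SS z /\ 1 <= z <= INR r) (map zz (seq 0 Nr'))) as [k [l Hl]].
  - intros z [Sz Hz]. apply HS in Sz. destruct Sz as [HR0 [n [Hn1 [E Gn]]]].
    destruct (le_lt_dec Nr' n) as [h|h].
    + exfalso. specialize (HNr (INR n) (HNr' n h)). rewrite <- E in HNr.
      pose proof (peval_bound Q1 (INR r) z ltac:(lra) ltac:(lra)). pose proof (Rle_abs (peval Q1 z)). lra.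
    + apply in_map_iff. exists n. split; [|apply in_seq; lia].
      apply zz_eq; auto. unfold R0', Rmax. destruct (Rle_dec R0 1); lra.
  - exists l. tauto.
Qed.

Lemma constants : exists N0 : nat, (1 <= N0)%nat /\
  forall n, (N0 <= n)%nat ->
    R0' <= zz n /\ peval Q1 (zz n) = peval P (INR n) /\ Rabs (zz n - c1 * INR n - d1) < 1 /\
    (forall n', (N0 <= n')%nat -> zz n = zz n' -> n = n').
Proof.
  destruct (eventually_incr P m HP Hm HaP) as [XP [HXP1 HXP]].
  destruct (key_approx P Q1 m HP HQ Hm HaP HaQ 1 ltac:(lra)) as [Nka HNka].
  destruct (poly_big m Hm P HP HaP (peval Q1 R0')) as [Nex HNex].
  destruct (real_to_nat_bound (Rmax (Rmax XP Nka) Nex)) as [N0 HN0].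
  exists (S N0). split; [lia|]. intros n Hn.
  assert (Hn' : Rmax (Rmax XP Nka) Nex <= INR n) by (apply HN0; lia).
  assert (H1 : XP <= INR n) by (pose proof (Rmax_l XP Nka); pose proof (Rmax_l (Rmax XP Nka) Nex); lra).
  assert (H2 : Nka <= INR n) by (pose proof (Rmax_r XP Nka); pose proof (Rmax_l (Rmax XP Nka) Nex); lra).
  assert (H3 : Nex <= INR n) by (pose proof (Rmax_r (Rmax XP Nka) Nex); lra).
  assert (Hex : exists z, R0' <= z /\ peval Q1 z = peval P (INR n)).
  { destruct (poly_big m Hm Q1 HQ HaQ (peval P (INR n))) as [Y HY].
    set (Y' := Rmax Y R0').
    destruct (IVT_cor (fun z => peval Q1 z - peval P (INR n)) R0' Y') as [z [Hz Ez]].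
    - apply continuity_minus; [apply peval_continuous|apply continuity_const; intros ? ?; reflexivity].
    - apply Rmax_r.
    - specialize (HNex _ H3). specialize (HY Y' (Rmax_l _ _)).
      assert (peval Q1 R0' - peval P (INR n) <= 0) by lra.
      assert (0 <= peval Q1 Y' - peval P (INR n)) by lra. nra.
    - exists z. split; [lra|]. simpl in Ez. lra. }
  destruct (zz_spec n Hex) as [Z1 Z2].
  split; [auto|split; [auto|split]].
  - apply HNka; auto. destruct R0'_ge; lra.
  - intros n' Hn2 E.
    assert (Hex' : exists z, R0' <= z /\ peval Q1 z = peval P (INR n')).
    { idtac.
      destruct (poly_big m Hm Q1 HQ HaQ (peval P (INR n'))) as [Y HY].
      set (Y' := Rmax Y R0').
      destruct (IVT_cor (fun z => peval Q1 z - peval P (INR n')) R0' Y') as [z [Hz Ez]].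
      - apply continuity_minus; [apply peval_continuous|apply continuity_const; intros ? ?; reflexivity].
      - apply Rmax_r.
      - assert (Nex <= INR n') by (pose proof (Rmax_r (Rmax XP Nka) Nex); pose proof (HN0 n' ltac:(lia)); lra).
        specialize (HNex _ H). specialize (HY Y' (Rmax_l _ _)).
        assert (peval Q1 R0' - peval P (INR n') <= 0) by lra.
        assert (0 <= peval Q1 Y' - peval P (INR n')) by lra. nra.
      - exists z. split; [lra|]. simpl in Ez. lra. }
    destruct (zz_spec n' Hex') as [Z1' Z2'].
    assert (EP : peval P (INR n) = peval P (INR n')) by congruence.
    assert (XP <= INR n') by (assert (Rmax (Rmax XP Nka) Nex <= INR n') by (apply HN0; lia);
                              pose proof (Rmax_l XP Nka); pose proof (Rmax_l (Rmax XP Nka) Nex); lra).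
    destruct (Rtotal_order (INR n) (INR n')) as [h|[h|h]].
    + pose proof (HXP _ _ H1 h). lra.
    + apply INR_eq; auto.
    + pose proof (HXP _ _ H h). lra.
Qed.

Definition s3 (r : nat) : nat := nfloor ((INR r - d1) / c1).
Definition B3 (r : nat) : nat := (nfloor ((INR r + Rabs d1 + 1) / c1) + 1)%nat.

Lemma c1_pos : 0 < c1.
Proof. apply cfac_pos. Qed.

Lemma s3_bound r : Rabs (INR (s3 r) - / c1 * INR r) <= 1 + 2 * (Rabs d1 / c1).
Proof.
  pose proof c1_pos as Hc. unfold s3.
  set (x := (INR r - d1) / c1).
  pose proof (nfloor_le x). pose proof (nfloor_gt x). pose proof (pos_INR (nfloor x)).
  assert (Ex : / c1 * INR r = x + d1 / c1) by (unfold x; field; lra).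
  rewrite Ex.
  assert (Hd : Rabs d1 / c1 >= d1 / c1 /\ Rabs d1 / c1 >= - (d1 / c1)).
  { split; unfold Rdiv; apply Rle_ge.
    - apply Rmult_le_compat_r; [left; apply Rinv_0_lt_compat; auto|apply Rle_abs].
    - replace (- (d1 * / c1)) with ((- d1) * / c1) by ring. apply Rmult_le_compat_r; [left; apply Rinv_0_lt_compat; auto|].
      rewrite <- Rabs_Ropp. apply Rle_abs. }
  unfold Rmax in H. destruct (Rle_dec x 0) as [h|h].
  - assert (INR r >= 0) by (apply Rle_ge, pos_INR).
    assert (- x <= Rabs d1 / c1).
    { unfold x. replace (- ((INR r - d1) / c1)) with (d1 / c1 - INR r / c1) by (field; lra).
      assert (0 <= INR r / c1) by (apply Rmult_le_pos; [lra|left; apply Rinv_0_lt_compat; auto]). lra. }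
    apply Rabs_le; split; lra.
  - apply Rabs_le; split; lra.
Qed.

Lemma part3_limit : exists f : nat -> nat,
  (forall r, has_card (fun z => SS z /\ 1 <= z <= INR r) (f r)) /\
  Un_cv (fun r => INR (f r) / INR r) (/ c1 * rho).
Proof.
  pose proof c1_pos as Hc.
  assert (Hf : forall r, exists k, has_card (fun z => SS z /\ 1 <= z <= INR r) k).
  { intros r. destruct (finite_Sr r) as [l [Nl Hl]]. exists (length l), l. auto. }
  set (f := fun r => epsilon (inhabits 0%nat) (fun k => has_card (fun z => SS z /\ 1 <= z <= INR r) k)).
  assert (Hfs : forall r, has_card (fun z => SS z /\ 1 <= z <= INR r) (f r)).
  { intros r. unfold f. apply epsilon_spec. apply Hf. }
  exists f. split; auto.
  destruct constants as [N0 [HN01 HN0]].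
  destruct (poly_big m Hm Q1 HQ HaQ (pabs P (INR N0) + 1)) as [Z0' HZ0'].
  set (Z0 := Rmax R0' Z0').
  assert (HZ0 : forall z (n : nat), Z0 <= z -> peval Q1 z = peval P (INR n) -> (N0 <= n)%nat).
  { intros z n Hz E. destruct (le_lt_dec N0 n) as [h|h]; auto. exfalso.
    specialize (HZ0' z ltac:(unfold Z0 in Hz; pose proof (Rmax_r R0' Z0'); lra)).
    assert (INR n <= INR N0) by (apply le_INR; lia).
    pose proof (peval_bound P (INR N0) (INR n) (pos_INR n) H). rewrite <- E in H0.
    pose proof (Rle_abs (peval Q1 z)). lra. }
  assert (HZ0R : R0' <= Z0) by apply Rmax_l.
  destruct R0'_ge as [HR0a HR0b].
  set (R1 := (nfloor Z0 + 1)%nat).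
  assert (HR1 : forall r, (R1 <= r)%nat -> Z0 <= INR r).
  { intros r Hr. apply le_INR in Hr. unfold R1 in Hr. rewrite plus_INR in Hr. simpl in Hr.
    pose proof (nfloor_gt Z0). lra. }
  destruct (finite_Sr R1) as [l1 [Nl1 Hl1]].
  destruct (has_card_exists (fun z => SS z /\ 1 <= z /\ z < Z0) l1) as [kA [LA [NLA [LLA HLA]]]].
  { intros z [Sz [H1 H2]]. apply Hl1. split; auto. split; auto. pose proof (HR1 R1 (le_n _)). lra. }
  set (Pr := fun (r n : nat) => (N0 <= n)%nat /\ G n /\ Z0 <= zz n /\ zz n <= INR r).
  assert (Claim1 : forall r, (R1 <= r)%nat -> f r = (kA + ccount (Pr r) (seq 0 (B3 r)))%nat).
  { intros r Hr. apply (has_card_unique (fun z => SS z /\ 1 <= z <= INR r)); auto.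
    set (Fl := filter (fun n => decb (Pr r n)) (seq 0 (B3 r))).
    assert (HFl : forall n, In n Fl <-> In n (seq 0 (B3 r)) /\ Pr r n).
    { intros n. unfold Fl. rewrite filter_In. unfold decb. destruct (excluded_middle_informative (Pr r n)); intuition congruence. }
    exists (LA ++ map zz Fl). split; [|split].
    - apply NoDup_app; auto.
      + apply NoDup_map_inj_on; [apply NoDup_filter, seq_NoDup|].
        intros n n' Hn Hn' E. apply HFl in Hn. apply HFl in Hn'.
        destruct Hn as [_ [Hn _]]. destruct Hn' as [_ [Hn' _]].
        destruct (HN0 n Hn) as [_ [_ [_ Hi]]]. apply Hi; auto.
      + intros z Hz1 Hz2. apply HLA in Hz1. apply in_map_iff in Hz2. destruct Hz2 as [n [<- Hn]].
        apply HFl in Hn. unfold Pr in Hn. lra.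
    - rewrite length_app, length_map, LLA. f_equal. rewrite ccount_filter. reflexivity.
    - intros z. rewrite in_app_iff, in_map_iff. split.
      + intros [Hz|[n [<- Hn]]].
        * apply HLA in Hz. destruct Hz as [Sz [H1 H2]]. pose proof (HR1 r Hr). split; auto; lra.
        * apply HFl in Hn. destruct Hn as [_ [HnN [Gn [H1 H2]]]].
          destruct (HN0 n HnN) as [Z1 [Z2 _]]. split; [|split; lra].
          apply HS. split; [lra|]. exists n. split; [lia|]. auto.
      + intros [Sz [H1 H2]]. destruct (Rlt_or_le z Z0) as [h|h].
        * left. apply HLA. auto.
        * right. pose proof Sz as Sz'. apply HS in Sz'. destruct Sz' as [HzR [n [Hn1 [E Gn]]]].
          pose proof (HZ0 z n h E) as HnN.
          assert (Ez : zz n = z) by (apply zz_eq; auto; lra).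
          exists n. split; auto. apply HFl. split.
          -- apply in_seq. split; [lia|]. simpl.
             destruct (HN0 n HnN) as [_ [_ [Hab _]]]. rewrite Ez in Hab. apply Rabs_def2 in Hab.
             unfold B3. assert (INR n <= (INR r + Rabs d1 + 1) / c1).
             { apply Rmult_le_reg_l with c1; auto. replace (c1 * ((INR r + Rabs d1 + 1) / c1)) with (INR r + Rabs d1 + 1) by (field; lra).
               pose proof (Rle_abs (- d1)). rewrite Rabs_Ropp in H. lra. }
             apply nat_le_nfloor in H; [lia|]. apply Rmult_le_pos; [pose proof (pos_INR r); pose proof (Rabs_pos d1); lra|left; apply Rinv_0_lt_compat; auto].
          -- unfold Pr. rewrite Ez. repeat split; auto; lra. }
  set (K1 := Rmax (INR N0) ((Z0 - d1 + 1) / c1)).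
  assert (HK1 : 0 <= K1) by (unfold K1; pose proof (pos_INR N0); pose proof (Rmax_l (INR N0) ((Z0 - d1 + 1) / c1)); lra).
  set (E := fun (r n : nat) => (-1 < INR n < -1 + (K1 + 2)) \/
                               ((INR r - d1 - 1) / c1 < INR n < (INR r - d1 - 1) / c1 + 2 / c1)).
  set (T3 := fun (r n : nat) => G n /\ (1 <= n)%nat /\ (n <= s3 r)%nat).
  assert (HE : forall r, INR (ccount (E r) (seq 0 (B3 r))) <= (K1 + 2 + 2) + (2 / c1 + 2)).
  { intros r. eapply Rle_trans; [apply le_INR, ccount_or|]. rewrite plus_INR.
    apply Rplus_le_compat.
    - apply window_count; [apply seq_NoDup|lra].
    - apply window_count; [apply seq_NoDup|]. apply Rmult_le_pos; [lra|left; apply Rinv_0_lt_compat; auto]. }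
  assert (Hx2 : forall r : nat, (INR r - d1 - 1) / c1 + 2 / c1 = (INR r - d1 + 1) / c1) by (intros; field; lra).
  assert (HT1 : forall r n, T3 r n -> INR n <= (INR r - d1) / c1).
  { intros r n [_ [H1 H2]]. apply le_INR in H2. pose proof (nfloor_le ((INR r - d1) / c1)).
    fold (s3 r) in H. apply le_INR in H1. simpl in H1. unfold Rmax in H. destruct (Rle_dec ((INR r - d1) / c1) 0); lra. }
  assert (Hd1 : forall r n, Pr r n -> T3 r n \/ E r n).
  { intros r n [HnN [Gn [H1 H2]]]. destruct (le_lt_dec n (s3 r)) as [h|h].
    - left. split; auto. split; auto. lia.
    - right. right. destruct (HN0 n HnN) as [_ [_ [Hab _]]]. apply Rabs_def2 in Hab.
      rewrite Hx2 by auto.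
      assert (INR n > (INR r - d1) / c1).
      { destruct (Rle_dec 0 ((INR r - d1) / c1)) as [h0|h0].
        - destruct (Rlt_or_le ((INR r - d1) / c1) (INR n)) as [h1|h1]; auto.
          apply nat_le_nfloor in h1; auto. unfold s3 in h. lia.
        - pose proof (pos_INR n). lra. }
      split.
      + assert ((INR r - d1 - 1) / c1 < (INR r - d1) / c1).
        { unfold Rdiv. apply Rmult_lt_compat_r; [apply Rinv_0_lt_compat; auto|lra]. }
        lra.
      + apply Rmult_lt_reg_l with c1; auto. replace (c1 * ((INR r - d1 + 1) / c1)) with (INR r - d1 + 1) by (field; lra). lra. }
  assert (Hd2 : forall r n, T3 r n -> Pr r n \/ E r n).
  { intros r n HT. pose proof (HT1 r n HT) as Hx. destruct HT as [Gn [H1 H2]].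
    destruct (le_lt_dec N0 n) as [h|h].
    - destruct (HN0 n h) as [_ [_ [Hab _]]]. apply Rabs_def2 in Hab.
      destruct (Rlt_or_le (zz n) Z0) as [h1|h1].
      + right. left. split; [pose proof (pos_INR n); lra|].
        assert (INR n < (Z0 - d1 + 1) / c1).
        { apply Rmult_lt_reg_l with c1; auto. replace (c1 * ((Z0 - d1 + 1) / c1)) with (Z0 - d1 + 1) by (field; lra). lra. }
        pose proof (Rmax_r (INR N0) ((Z0 - d1 + 1) / c1)). fold K1 in H0. lra.
      + destruct (Rle_or_lt (zz n) (INR r)) as [h2|h2].
        * left. unfold Pr. auto.
        * right. right. rewrite Hx2 by auto. split.
          -- apply Rmult_lt_reg_l with c1; auto. replace (c1 * ((INR r - d1 - 1) / c1)) with (INR r - d1 - 1) by (field; lra). lra.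
          -- assert ((INR r - d1) / c1 < (INR r - d1 + 1) / c1).
             { unfold Rdiv. apply Rmult_lt_compat_r; [apply Rinv_0_lt_compat; auto|lra]. }
             lra.
    - right. left. apply lt_INR in h. pose proof (Rmax_l (INR N0) ((Z0 - d1 + 1) / c1)). fold K1 in H.
      pose proof (pos_INR n). lra. }
  assert (HsB : forall r, (s3 r < B3 r)%nat).
  { intros r. unfold s3, B3.
    set (x := (INR r - d1) / c1). set (y := (INR r + Rabs d1 + 1) / c1).
    assert (Hxy : Rmax x 0 <= y).
    { unfold x, y. assert (0 <= y).
      { apply Rmult_le_pos; [pose proof (pos_INR r); pose proof (Rabs_pos d1); lra|left; apply Rinv_0_lt_compat; auto]. }
      unfold Rmax. destruct (Rle_dec ((INR r - d1) / c1) 0); [unfold y in H; lra|].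
      unfold Rdiv. apply Rmult_le_compat_r; [left; apply Rinv_0_lt_compat; auto|].
      pose proof (Rle_abs (- d1)). rewrite Rabs_Ropp in H0. lra. }
    pose proof (nfloor_le x). pose proof (nfloor_gt y).
    assert (INR (nfloor x) < INR (nfloor y + 1)) by (rewrite plus_INR; simpl; lra).
    apply INR_lt in H1. auto. }
  assert (Claim2 : forall r, Rabs (INR (ccount (Pr r) (seq 0 (B3 r))) - INR (cnt G (s3 r))) <= (K1 + 2 + 2) + (2 / c1 + 2)).
  { intros r. rewrite <- (ccount_cnt_seq0 G (s3 r) (B3 r) (HsB r)). fold (T3 r).
    pose proof (ccount_disagree (Pr r) (T3 r) (E r) (seq 0 (B3 r)) ltac:(intros; apply Hd1; auto)) as A1.
    pose proof (ccount_disagree (T3 r) (Pr r) (E r) (seq 0 (B3 r)) ltac:(intros; apply Hd2; auto)) as A2.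
    apply le_INR in A1. apply le_INR in A2. rewrite plus_INR in A1, A2. specialize (HE r).
    apply Rabs_le; split; lra. }
  apply approx_cv.
  apply approx_ev_close with (y := fun r => INR (cnt G (s3 r))) (R1 := R1) (B := INR kA + ((K1 + 2 + 2) + (2 / c1 + 2))).
  - intros r Hr. rewrite (Claim1 r Hr). rewrite plus_INR. specialize (Claim2 r).
    pose proof (pos_INR kA).
    apply Rabs_le. apply Rabs_def2 in Claim2 || idtac.
    assert (Rabs (INR (ccount (Pr r) (seq 0 (B3 r))) - INR (cnt G (s3 r))) >= 0) by (apply Rle_ge, Rabs_pos).
    pose proof (Rle_abs (INR (ccount (Pr r) (seq 0 (B3 r))) - INR (cnt G (s3 r)))).
    pose proof (Rle_abs (- (INR (ccount (Pr r) (seq 0 (B3 r))) - INR (cnt G (s3 r))))). rewrite Rabs_Ropp in H2.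
    split; lra.
  - apply (approx_comp (fun r => INR (cnt G r)) rho s3 (/ c1) (1 + 2 * (Rabs d1 / c1))).
    + left; apply Rinv_0_lt_compat; auto.
    + apply s3_bound.
    + apply HG.
Qed.

End Part3.


Lemma cc_cfac q m i j : cc q m i j = cfac (q j) (q i) m.
Proof. reflexivity. Qed.

Lemma Rpower_inv x y : 0 < x -> Rpower (/ x) y = / Rpower x y.
Proof. intros Hx. unfold Rpower. rewrite ln_Rinv by auto. rewrite <- exp_Ropp. f_equal. ring. Qed.

Lemma cc_inv q m i j : 0 < lead q m i -> 0 < lead q m j -> cc q m i j = / cc q m j i.
Proof.
  intros Hi Hj. unfold cc. rewrite <- Rpower_inv by (apply Rdiv_lt_0_compat; auto).
  f_equal. field. split; lra.
Qed.

Lemma cc_pos q m i j : 0 < cc q m i j.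
Proof. unfold cc, Rpower. apply exp_pos. Qed.

Lemma mod_mod_dvd n a L : (0 < a)%nat -> Nat.divide a L -> ((n mod L) mod a = n mod a)%nat.
Proof.
  intros Ha [k Hk]. subst L. pose proof (Nat.div_mod_eq n (k * a)) as E.
  set (q0 := (n / (k * a))%nat) in *. set (r0 := (n mod (k * a))%nat) in *.
  assert (E2 : n = (r0 + (k * q0) * a)%nat) by (rewrite E at 1; ring).
  rewrite E2. rewrite Nat.Div0.mod_add. reflexivity.
Qed.

Lemma reduced_frac (c : R) : is_rat c -> 0 < c ->
  exists al be : nat, (0 < al)%nat /\ (0 < be)%nat /\ Nat.gcd al be = 1%nat /\ c = INR be / INR al.
Proof.
  intros [p [r [Hr E]]] Hc.
  assert (Hp : p <> 0%Z) by (intros ->; rewrite E in Hc; unfold Rdiv in Hc; rewrite Rmult_0_l in Hc; lra).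
  set (p' := Z.abs_nat p). set (r' := Z.abs_nat r).
  assert (Hc' : c = INR p' / INR r').
  { unfold p', r'. rewrite !INR_IZR_INZ, !Nat2Z.inj_abs_nat. rewrite E in *.
    assert (IZR r <> 0) by (apply not_0_IZR; auto).
    destruct (Z_lt_le_dec 0 r) as [h|h]; destruct (Z_lt_le_dec 0 p) as [h'|h'].
    - rewrite !Z.abs_eq by lia. reflexivity.
    - exfalso. assert (IZR p < 0) by (apply IZR_lt; lia). assert (0 < IZR r) by (apply IZR_lt; lia).
      assert (IZR p / IZR r < 0) by (unfold Rdiv; apply Rmult_neg_pos; [lra|apply Rinv_0_lt_compat; lra]). lra.
    - exfalso. assert (0 < IZR p) by (apply IZR_lt; lia). assert (IZR r < 0) by (apply IZR_lt; lia).
      assert (IZR p / IZR r < 0) by (unfold Rdiv; apply Rmult_pos_neg; [lra|apply Rinv_lt_0_compat; lra]). lra.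
    - rewrite !Z.abs_neq by lia. rewrite !opp_IZR. field. auto. }
  assert (Hp' : (0 < p')%nat) by (unfold p'; lia). assert (Hr' : (0 < r')%nat) by (unfold r'; lia).
  set (g := Nat.gcd r' p').
  assert (Hg : g <> 0%nat) by (unfold g; intros H; apply Nat.gcd_eq_0 in H; lia).
  exists (r' / g)%nat, (p' / g)%nat.
  destruct (Nat.gcd_divide_l r' p') as [kr Hkr]. destruct (Nat.gcd_divide_r r' p') as [kp Hkp].
  fold g in Hkr, Hkp.
  assert (E1 : (r' / g = kr)%nat) by (rewrite Hkr; apply Nat.div_mul; auto).
  assert (E2 : (p' / g = kp)%nat) by (rewrite Hkp; apply Nat.div_mul; auto).
  split; [rewrite E1; nia|]. split; [rewrite E2; nia|]. split.
  - apply Nat.gcd_div_gcd; auto.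
  - rewrite E1, E2, Hc'. rewrite Hkr, Hkp, !mult_INR.
    assert (INR g <> 0) by (apply not_0_INR; auto).
    assert (INR kr <> 0) by (apply not_0_INR; nia). field. split; auto.
Qed.

Lemma reduced_unique al be al' be' : (0 < al)%nat -> (0 < al')%nat ->
  Nat.gcd al be = 1%nat -> Nat.gcd al' be' = 1%nat ->
  INR be / INR al = INR be' / INR al' -> al = al' /\ be = be'.
Proof.
  intros H1 H2 G1 G2 E.
  assert (Ha : INR al <> 0) by (apply not_0_INR; lia). assert (Ha' : INR al' <> 0) by (apply not_0_INR; lia).
  assert (E' : (be * al' = be' * al)%nat).
  { apply INR_eq. rewrite !mult_INR. apply (f_equal (fun x => x * INR al * INR al')) in E.
    field_simplify in E; auto. lra. }
  assert (D1 : Nat.divide al al').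
  { apply Nat.gauss with be; auto. exists be'. lia. }
  assert (D2 : Nat.divide al' al).
  { apply Nat.gauss with be'; auto. exists be. lia. }
  assert (al = al') by (apply Nat.divide_antisym; auto). subst. split; auto. nia.
Qed.

Lemma T_in t i : (1 <= i <= length t)%nat -> In (T t i) t.
Proof. intros H. unfold T. apply nth_In. lia. Qed.

Lemma T_range k t i : valid_tuple k t -> (1 <= i <= length t)%nat -> (1 <= T t i <= k)%nat.
Proof. intros [_ [_ H]] Hi. apply H. apply T_in; auto. Qed.

Lemma forall_T_iff t (Phi : nat -> Prop) :
  (forall j, (1 <= j <= length t)%nat -> Phi (T t j)) <-> (forall s, In s t -> Phi s).
Proof.
  split.
  - intros H s Hs. apply In_nth with (d := 0%nat) in Hs. destruct Hs as [n [Hn <-]].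
    replace (nth n t 0%nat) with (T t (S n)) by (unfold T; f_equal; lia). apply H. lia.
  - intros H j Hj. apply H, T_in; auto.
Qed.

Lemma lcm_ext u al al' : (forall i, (2 <= i <= u)%nat -> al i = al' i) ->
  lcm_list (map al (idx2 u)) = lcm_list (map al' (idx2 u)).
Proof.
  intros H. f_equal. apply map_ext_in. intros i Hi. apply H. unfold idx2 in Hi. apply in_seq in Hi. lia.
Qed.

Lemma Mformula_ext u al be x al' be' x' :
  (forall i, (2 <= i <= u)%nat -> al i = al' i /\ be i = be' i /\ x i = x' i) ->
  Mformula u al be x = Mformula u al' be' x'.
Proof.
  intros H. unfold Mformula.
  assert (Em : map al (idx2 u) = map al' (idx2 u)).
  { apply map_ext_in. intros i Hi. apply H. unfold idx2 in Hi. apply in_seq in Hi. lia. }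
  rewrite Em. apply ccount_ext. intros ws _. split.
  - intros [HW HV]. split.
    + intros i Hi. destruct (H i Hi) as [Ea [Eb Ex]]. rewrite <- Ea, <- Eb, <- Ex. auto.
    + intros i j Hi Hj. destruct (H i Hi) as [Ei _]. destruct (H j Hj) as [Ej _].
      rewrite <- Ei, <- Ej. apply HV; auto.
  - intros [HW HV]. split.
    + intros i Hi. destruct (H i Hi) as [Ea [Eb Ex]]. rewrite Ea, Eb, Ex. auto.
    + intros i j Hi Hj. destruct (H i Hi) as [Ei _]. destruct (H j Hj) as [Ej _].
      rewrite Ei, Ej. apply HV; auto.
Qed.

Lemma ev_range (Phi : nat -> nat -> Prop) a b :
  (forall i, (a <= i <= b)%nat -> exists N, forall n, (N <= n)%nat -> Phi i n) ->
  exists N, forall n, (N <= n)%nat -> forall i, (a <= i <= b)%nat -> Phi i n.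
Proof.
  induction b; intros H.
  - destruct (le_lt_dec a 0) as [h|h].
    + destruct (H 0%nat ltac:(lia)) as [N HN]. exists N. intros n Hn i Hi. replace i with 0%nat by lia. auto.
    + exists 0%nat. intros n _ i Hi. lia.
  - destruct IHb as [N1 HN1]; [intros; apply H; lia|].
    destruct (le_lt_dec a (S b)) as [h|h].
    + destruct (H (S b) ltac:(lia)) as [N2 HN2]. exists (N1 + N2)%nat. intros n Hn i Hi.
      destruct (Nat.eq_dec i (S b)) as [->|E]; [apply HN2; lia|apply HN1; lia].
    + exists N1. intros n Hn i Hi. lia.
Qed.


Lemma ss_seq a n : StronglySorted lt (seq a n).
Proof.
  revert a; induction n; intros a; simpl; constructor; auto.
  apply Forall_forall. intros x Hx. apply in_seq in Hx. lia.
Qed.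

Lemma ss_subseqs l t : StronglySorted lt l -> In t (subseqs l) ->
  StronglySorted lt t /\ (forall x, In x t -> In x l).
Proof.
  revert t; induction l as [|a l IH]; intros t Hs Ht; simpl in Ht.
  - destruct Ht as [<-|[]]. split; [constructor|simpl; tauto].
  - inversion Hs; subst. apply in_app_or in Ht. destruct Ht as [Ht|Ht].
    + apply in_map_iff in Ht. destruct Ht as [t' [<- Ht']].
      destruct (IH t' H1 Ht') as [S1 S2]. split.
      * constructor; auto. apply Forall_forall. intros x Hx. rewrite Forall_forall in H2. apply H2, S2; auto.
      * intros x [E|E]; [left; auto|right; auto].
    + destruct (IH t H1 Ht) as [S1 S2]. split; auto. intros x Hx; right; auto.
Qed.

Lemma ss_nth t : StronglySorted lt t -> forall j, (S j < length t)%nat -> (nth j t 0 < nth (S j) t 0)%nat.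
Proof.
  induction t as [|a t IH]; intros Hs j Hj; simpl in Hj; [lia|].
  inversion Hs; subst. destruct j.
  - destruct t as [|b t']; simpl in Hj; [lia|]. simpl. rewrite Forall_forall in H2. apply H2. left; auto.
  - simpl. apply IH; auto. lia.
Qed.

Lemma valid_ns k t : In t (nonempty_subseqs (seq 1 k)) -> valid_tuple k t.
Proof.
  intros H. unfold nonempty_subseqs in H. apply filter_In in H. destruct H as [H Hne].
  destruct (ss_subseqs _ _ (ss_seq 1 k) H) as [S1 S2].
  split; [destruct t; [discriminate|congruence]|]. split.
  - apply ss_nth; auto.
  - intros s Hs. apply S2 in Hs. apply in_seq in Hs. lia.
Qed.

Lemma Rsum_app l1 l2 : Rsum_list (l1 ++ l2) = Rsum_list l1 + Rsum_list l2.
Proof. induction l1; simpl; [ring|rewrite IHl1; ring]. Qed.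

Lemma Rsum_scal {A} (f : A -> R) a l : Rsum_list (map (fun x => a * f x) l) = a * Rsum_list (map f l).
Proof. induction l; simpl; [ring|rewrite IHl; ring]. Qed.

Lemma Rsum_plus {A} (f g : A -> R) l : Rsum_list (map (fun x => f x + g x) l) = Rsum_list (map f l) + Rsum_list (map g l).
Proof. induction l; simpl; [ring|rewrite IHl; ring]. Qed.

Lemma Rsum_ext {A} (f g : A -> R) l : (forall x, In x l -> f x = g x) -> Rsum_list (map f l) = Rsum_list (map g l).
Proof. intros H; f_equal; apply map_ext_in; auto. Qed.

Lemma Rsum_swap {A B} (a : A -> R) (h : A -> B -> R) (l1 : list A) (l2 : list B) :
  Rsum_list (map (fun t => a t * Rsum_list (map (fun z => h t z) l2)) l1) =
  Rsum_list (map (fun z => Rsum_list (map (fun t => a t * h t z) l1)) l2).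
Proof.
  induction l1 as [|t l1 IH]; simpl.
  - clear. induction l2; simpl; [ring|rewrite <- IHl2; ring].
  - rewrite IH. rewrite <- Rsum_scal. rewrite <- Rsum_plus. reflexivity.
Qed.

Lemma ccount_Rsum {A} (P : A -> Prop) l : INR (ccount P l) = Rsum_list (map (fun z => INR (dec01 (P z))) l).
Proof. induction l; simpl; [reflexivity|rewrite plus_INR, IHl; reflexivity]. Qed.

Lemma dec01_and (P Q : Prop) : INR (dec01 (P /\ Q)) = INR (dec01 P) * INR (dec01 Q).
Proof.
  unfold dec01. destruct (excluded_middle_informative (P /\ Q)); destruct (excluded_middle_informative P);
  destruct (excluded_middle_informative Q); simpl; try ring; tauto.
Qed.

Section IE.
Variables (A : nat -> R -> Prop) (z : R).
Definition iota s := INR (dec01 (A s z)).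
Definition piz (t : list nat) := INR (dec01 (forall s, In s t -> A s z)).

Lemma piz_nil : piz nil = 1.
Proof. unfold piz. rewrite dec01_true; [reflexivity|simpl; tauto]. Qed.

Lemma piz_cons x t : piz (x :: t) = iota x * piz t.
Proof.
  unfold piz, iota. rewrite <- dec01_and. f_equal. apply dec01_iff. simpl. firstorder congruence.
Qed.

Lemma IE1 l : Rsum_list (map (fun t => (-1) ^ (length t) * piz t) (subseqs l)) =
  fold_right (fun s acc => (1 - iota s) * acc) 1 l.
Proof.
  induction l as [|x l IH]; simpl.
  - rewrite piz_nil. ring.
  - rewrite map_app, Rsum_app, map_map. rewrite IH.
    rewrite (Rsum_ext _ (fun t => - iota x * ((-1) ^ length t * piz t))).
    + rewrite Rsum_scal, IH. ring.
    + intros t _. simpl. rewrite piz_cons. ring.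
Qed.

Lemma IE2 (g : list nat -> R) l : Rsum_list (map g (subseqs l)) = g nil + Rsum_list (map g (nonempty_subseqs l)).
Proof.
  unfold nonempty_subseqs. induction l as [|x l IH]; simpl.
  - ring.
  - rewrite filter_app, !map_app, !Rsum_app, IH.
    assert (E : filter (fun t => match t with nil => false | _ => true end) (map (cons x) (subseqs l)) = map (cons x) (subseqs l)).
    { clear. induction (subseqs l); simpl; auto. rewrite IHl0. reflexivity. }
    rewrite E. ring.
Qed.

Lemma prod_zero l : (exists s, In s l /\ A s z) -> fold_right (fun s acc => (1 - iota s) * acc) 1 l = 0.
Proof.
  induction l as [|x l IH]; intros [s [Hs As]]; simpl in *; [tauto|].
  destruct Hs as [<-|Hs].
  - unfold iota. rewrite dec01_true by auto. simpl. ring.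
  - rewrite IH; [ring|exists s; auto].
Qed.

Lemma IE_main l : (exists s, In s l /\ A s z) ->
  Rsum_list (map (fun t => (-1) ^ (S (length t)) * piz t) (nonempty_subseqs l)) = 1.
Proof.
  intros H.
  pose proof (IE2 (fun t => (-1) ^ (length t) * piz t) l) as E2.
  rewrite IE1, prod_zero in E2 by auto. simpl in E2. rewrite piz_nil in E2.
  rewrite (Rsum_ext _ (fun t => -1 * ((-1) ^ length t * piz t))) by (intros; simpl; ring).
  rewrite Rsum_scal. lra.
Qed.
End IE.

Lemma hc_count (S : R -> Prop) n L : has_card S n -> NoDup L -> (forall z, S z -> In z L) -> n = ccount S L.
Proof.
  intros Hn NL HL. apply (has_card_unique S); auto.
  exists (filter (fun z => decb (S z)) L). split; [apply NoDup_filter; auto|]. split.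
  - rewrite ccount_filter. reflexivity.
  - intros z. rewrite filter_In. unfold decb. destruct (excluded_middle_informative (S z)); split; intros H.
    + auto.
    + split; auto.
    + destruct H; discriminate.
    + contradiction.
Qed.

Lemma approx_zero : approx (fun _ => 0) 0.
Proof. intros eps Heps. exists 0. intros r. replace (0 - 0 * INR r) with 0 by ring. rewrite Rabs_R0.
  pose proof (pos_INR r). assert (0 <= eps * INR r) by (apply Rmult_le_pos; lra). lra. Qed.

Lemma approx_sum {A} (a : A -> R) (y : A -> nat -> R) (L : A -> R) l :
  (forall t, In t l -> approx (y t) (L t)) ->
  approx (fun r => Rsum_list (map (fun t => a t * y t r) l)) (Rsum_list (map (fun t => a t * L t) l)).
Proof.
  induction l as [|t l IH]; intros H; simpl.
  - apply approx_zero.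
  - apply approx_plus; [apply approx_scal, H; left; auto|apply IH; intros; apply H; right; auto].
Qed.


Section Main.
Variables (k m : nat) (q : nat -> list R).
Hypotheses (Hk : (1 <= k)%nat) (Hm : (1 <= m)%nat)
  (Hdeg : forall i, (1 <= i <= k)%nat -> has_degree (q i) m)
  (Hinf : forall i, (1 <= i <= k)%nat -> tends_to_infty (peval (q i))).

Lemma leadq i : (1 <= i <= k)%nat -> 0 < nth m (q i) 0.
Proof. intros H. apply (lead_pos (q i) m (Hdeg i H) Hm (Hinf i H)). Qed.

Definition Hyp1 (t : list nat) (al be : nat -> nat) (x : nat -> R) : Prop :=
  forall i, (2 <= i <= length t)%nat ->
     (0 < al i)%nat /\ (0 < be i)%nat /\ Nat.gcd (al i) (be i) = 1%nat /\
     cc q m (T t i) (T t 1) = INR (be i) / INR (al i) /\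
     is_rat (x i) /\ shift_id q m t i (x i).

Definition P1 t := exists al be x, Hyp1 t al be x.

Definition wit (t : list nat) : (nat -> nat) * (nat -> nat) * (nat -> R) :=
  epsilon (inhabits (fun _ => 0%nat, fun _ => 0%nat, fun _ => 0))
    (fun w => Hyp1 t (fst (fst w)) (snd (fst w)) (snd w)).
Definition walp t := fst (fst (wit t)).
Definition wbe t := snd (fst (wit t)).
Definition wx t := snd (wit t).

Lemma wit_spec t : P1 t -> Hyp1 t (walp t) (wbe t) (wx t).
Proof.
  intros [al [be [x H]]]. unfold walp, wbe, wx, wit.
  apply (epsilon_spec (inhabits (fun _ => 0%nat, fun _ => 0%nat, fun _ => 0))
    (fun w => Hyp1 t (fst (fst w)) (snd (fst w)) (snd w))).
  exists (al, be, x). exact H.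
Qed.

Definition aa (t : list nat) : nat :=
  if Nat.leb (length t) 1 then 1%nat
  else if excluded_middle_informative (P1 t) then lcm_list (map (walp t) (idx2 (length t))) else 1%nat.
Definition MM (t : list nat) : nat :=
  if Nat.leb (length t) 1 then 1%nat
  else if excluded_middle_informative (P1 t) then Mformula (length t) (walp t) (wbe t) (wx t) else 0%nat.

Section Tuple.
Variable t : list nat.
Hypothesis Ht : valid_tuple k t.
Let u := length t.
Let t1 := T t 1.

Lemma u_pos : (1 <= u)%nat.
Proof. destruct Ht as [Hne _]. unfold u. destruct t; [contradiction|simpl; lia]. Qed.

Lemma Tr i : (1 <= i <= u)%nat -> (1 <= T t i <= k)%nat.
Proof. intros H. apply T_range; auto. Qed.

Lemma t1r : (1 <= t1 <= k)%nat.
Proof. apply Tr. pose proof u_pos. lia. Qed.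

Lemma shift_conv i e : (1 <= i <= u)%nat ->
  (shift_id q m t i e <-> forall z, peval (q (T t i)) (cfac (q t1) (q (T t i)) m * z + e) = peval (q t1) z).
Proof.
  intros Hi. unfold shift_id. fold t1.
  assert (Hinv : cc q m t1 (T t i) = / cfac (q t1) (q (T t i)) m).
  { rewrite <- cc_cfac. apply cc_inv; [apply leadq, t1r|apply leadq, Tr; auto]. }
  pose proof (cfac_pos (q t1) (q (T t i)) m) as Hc.
  rewrite Hinv. split.
  - intros H z. rewrite H. f_equal. field. lra.
  - intros H y. rewrite <- H. f_equal. field. lra.
Qed.

Lemma good_sol n : good q t n <-> forall i, (1 <= i <= u)%nat -> sol (q (T t i)) (q t1) n.
Proof. unfold good, sol. fold u t1. tauto. Qed.

Lemma sol_self n : (1 <= n)%nat -> sol (q t1) (q t1) n.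
Proof. intros H. exists n. split; auto. Qed.

Lemma dens_u1 : u = 1%nat -> dens (good q t) 1.
Proof.
  intros Hu. apply dens_all. intros n Hn. apply good_sol. intros i Hi.
  replace i with 1%nat by lia. apply sol_self; auto.
Qed.

Lemma dens_P1 al be x : (1 < u)%nat -> Hyp1 t al be x ->
  dens (good q t) (INR (Mformula u al be x) / INR (lcm_list (map al (idx2 u)))).
Proof.
  intros Hu H1.
  assert (Hal : forall i, (2 <= i <= u)%nat -> (0 < al i)%nat) by (intros i Hi; apply H1; auto).
  assert (Hev : forall i, (2 <= i <= u)%nat -> exists N, forall n, (N <= n)%nat ->
             (sol (q (T t i)) (q t1) n <-> inW (al i) (be i) (x i) (n mod al i))).
  { intros i Hi. destruct (H1 i Hi) as [Ha [Hb [_ [Hc [_ Hs]]]]].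
    pose proof (proj1 (shift_conv i (x i) ltac:(lia)) Hs) as Hs2. clear Hs. rename Hs2 into Hs.
    destruct (pair_shift (q t1) (q (T t i)) m (Hdeg _ t1r) Hm (leadq _ t1r) (x i) Hs) as [N HN].
    exists N. intros n Hn. rewrite HN by auto.
    rewrite <- cc_cfac. fold t1 in Hc. rewrite Hc. apply shift_periodic; auto. }
  destruct (ev_range _ 2 u Hev) as [N HN].
  set (L := LL u al).
  assert (HL : L = lcm_list (map al (idx2 u))) by reflexivity.
  rewrite <- HL, <- (crt_count u al be x Hal). fold L.
  apply (dens_ev (fun n => Pm u al be x (n mod L)) _ _ (N + 1)).
  - intros n Hn. rewrite good_sol. split.
    + intros HP i Hi. destruct (Nat.eq_dec i 1) as [->|Hne].
      * apply sol_self. lia.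
      * apply (HN n ltac:(lia) i ltac:(lia)). specialize (HP i ltac:(lia)).
        unfold Pm in HP. rewrite mod_mod_dvd in HP; auto; [apply Hal; lia|apply al_dvd_LL; lia].
    + intros Hg i Hi. unfold Pm. rewrite mod_mod_dvd; [|apply Hal; lia|apply al_dvd_LL; lia].
      apply (HN n ltac:(lia) i Hi). apply Hg. lia.
  - apply (dens_periodic (fun n => Pm u al be x (n mod L)) (Pm u al be x) L).
    + apply LL_pos; auto.
    + intros n. tauto.
Qed.

Definition badi (i : nat) : Prop :=
  ~ is_rat (cc q m (T t i) (T t 1)) \/
  (is_rat (cc q m (T t i) (T t 1)) /\ ~ (exists xi, is_rat xi /\ shift_id q m t i xi)).

Lemma notP1_bad : (1 < u)%nat -> ~ P1 t -> exists i, (2 <= i <= u)%nat /\ badi i.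
Proof.
  intros Hu NP. apply NNPP. intros Hno. apply NP.
  assert (Hgood : forall i, (2 <= i <= u)%nat -> exists w : nat * nat * R,
     (0 < fst (fst w))%nat /\ (0 < snd (fst w))%nat /\ Nat.gcd (fst (fst w)) (snd (fst w)) = 1%nat /\
     cc q m (T t i) (T t 1) = INR (snd (fst w)) / INR (fst (fst w)) /\
     is_rat (snd w) /\ shift_id q m t i (snd w)).
  { intros i Hi. assert (Hnb : ~ badi i) by (intros Hb; apply Hno; exists i; auto).
    unfold badi in Hnb.
    assert (Hr : is_rat (cc q m (T t i) (T t 1))) by (apply NNPP; intros H; apply Hnb; left; auto).
    assert (Hs : exists xi, is_rat xi /\ shift_id q m t i xi) by (apply NNPP; intros H; apply Hnb; right; auto).
    destruct Hs as [xi [Hxi Hsh]].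
    destruct (reduced_frac _ Hr (cc_pos q m _ _)) as [al [be [Ha [Hb [Hg Hc]]]]].
    exists (al, be, xi). simpl. auto 10. }
  set (F := fun i => epsilon (inhabits (0%nat, 0%nat, 0)) (fun w : nat * nat * R =>
     (0 < fst (fst w))%nat /\ (0 < snd (fst w))%nat /\ Nat.gcd (fst (fst w)) (snd (fst w)) = 1%nat /\
     cc q m (T t i) (T t 1) = INR (snd (fst w)) / INR (fst (fst w)) /\
     is_rat (snd w) /\ shift_id q m t i (snd w))).
  exists (fun i => fst (fst (F i))), (fun i => snd (fst (F i))), (fun i => snd (F i)).
  intros i Hi. unfold F. apply (epsilon_spec (inhabits (0%nat, 0%nat, 0)) (fun w : nat * nat * R =>
     (0 < fst (fst w))%nat /\ (0 < snd (fst w))%nat /\ Nat.gcd (fst (fst w)) (snd (fst w)) = 1%nat /\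
     cc q m (T t i) (T t 1) = INR (snd (fst w)) / INR (fst (fst w)) /\
     is_rat (snd w) /\ shift_id q m t i (snd w))).
  apply Hgood. auto.
Qed.

Lemma dens_bad i : (2 <= i <= u)%nat -> badi i -> dens (good q t) 0.
Proof.
  intros Hi Hb.
  assert (Hti : (1 <= T t i <= k)%nat) by (apply Tr; lia).
  apply (dens_mono_zero _ (sol (q (T t i)) (q t1))).
  { intros n Hg. apply good_sol with (i := i) in Hg; auto. lia. }
  unfold badi in Hb. fold t1 in Hb. rewrite !cc_cfac in Hb. destruct Hb as [Hb|[Hr Hb]].
  - apply (pair_irrational (q t1) (q (T t i)) m (Hdeg _ t1r) (Hdeg _ Hti) Hm (leadq _ t1r) (leadq _ Hti)).
    intros h Hh z Ez. apply Hb. exists z, (Z.of_nat h). split; [lia|].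
    rewrite <- INR_IZR_INZ, <- Ez. field. apply not_0_INR. lia.
  - destruct (pair_rational_noshift (q t1) (q (T t i)) m (Hdeg _ t1r) (Hdeg _ Hti) Hm (leadq _ t1r) (leadq _ Hti) Hr) as [N HN].
    + intros [e [He Hid]]. apply Hb. exists e. split; auto. apply (shift_conv i e ltac:(lia)). auto.
    + apply dens_zero_spacing. intros H HH. exists N. intros n n' Hn _ _ Hs _. apply (HN n Hn Hs).
Qed.

Lemma dens_tuple : dens (good q t) (INR (MM t) / INR (aa t)).
Proof.
  unfold MM, aa. fold u. destruct (Nat.leb_spec u 1) as [h|h].
  - replace (INR 1 / INR 1) with 1 by (simpl; field). apply dens_u1. pose proof u_pos. lia.
  - destruct (excluded_middle_informative (P1 t)) as [HP|HP].
    + apply dens_P1; auto. apply wit_spec; auto.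
    + replace (INR 0 / INR 1) with 0 by (simpl; field).
      destruct (notP1_bad h HP) as [i [Hi Hb]]. apply (dens_bad i); auto.
Qed.

Lemma aa_pos : (0 < aa t)%nat.
Proof.
  unfold aa. fold u. destruct (Nat.leb_spec u 1); [lia|].
  destruct (excluded_middle_informative (P1 t)) as [HP|HP]; [|lia].
  apply lcm_list_pos. intros a Ha. apply in_map_iff in Ha. destruct Ha as [i [<- Hi]].
  unfold idx2 in Hi. apply in_seq in Hi. apply (wit_spec t HP i). lia.
Qed.

Lemma MM_le : (MM t <= aa t)%nat.
Proof.
  unfold MM, aa. fold u. destruct (Nat.leb_spec u 1); [lia|].
  destruct (excluded_middle_informative (P1 t)) as [HP|HP]; [|lia].
  apply (Mformula_le u). intros i Hi. apply (wit_spec t HP i). auto.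
Qed.

Lemma part1 : (1 < u)%nat -> forall al be x, Hyp1 t al be x ->
  aa t = lcm_list (map al (idx2 u)) /\ MM t = Mformula u al be x.
Proof.
  intros Hu al be x H1.
  assert (HP : P1 t) by (exists al, be, x; auto).
  pose proof (wit_spec t HP) as H2.
  assert (Heq : forall i, (2 <= i <= u)%nat -> walp t i = al i /\ wbe t i = be i /\ wx t i = x i).
  { intros i Hi. destruct (H1 i Hi) as [Ha [Hb [Hg [Hc [Hr Hs]]]]].
    destruct (H2 i Hi) as [Ha' [Hb' [Hg' [Hc' [Hr' Hs']]]]].
    destruct (reduced_unique (walp t i) (wbe t i) (al i) (be i)) as [E1 E2]; auto; [congruence|].
    split; auto. split; auto.
    pose proof (proj1 (shift_conv i _ ltac:(lia)) Hs) as Hs2. pose proof (proj1 (shift_conv i _ ltac:(lia)) Hs') as Hs3.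
    assert (Hti : (1 <= T t i <= k)%nat) by (apply Tr; lia).
    rewrite (key_unique (q t1) (q (T t i)) m (Hdeg _ t1r) (Hdeg _ Hti) Hm (leadq _ t1r) (leadq _ Hti) _ Hs2).
    rewrite (key_unique (q t1) (q (T t i)) m (Hdeg _ t1r) (Hdeg _ Hti) Hm (leadq _ t1r) (leadq _ Hti) _ Hs3).
    reflexivity. }
  unfold aa, MM. fold u. destruct (Nat.leb_spec u 1); [lia|].
  destruct (excluded_middle_informative (P1 t)) as [_|NP]; [|contradiction].
  split.
  - apply lcm_ext. intros i Hi. apply Heq; auto.
  - apply Mformula_ext. auto.
Qed.

Lemma part2 : (1 < u)%nat -> (exists i, (2 <= i <= u)%nat /\ badi i) -> MM t = 0%nat.
Proof.
  intros Hu [i [Hi Hb]]. unfold MM. fold u. destruct (Nat.leb_spec u 1); [lia|].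
  destruct (excluded_middle_informative (P1 t)) as [HP|HP]; auto.
  exfalso. destruct (wit_spec t HP i Hi) as [Ha [Hbe [Hg [Hc [Hr Hs]]]]].
  destruct Hb as [Hb|[_ Hb]].
  - apply Hb. rewrite Hc. exists (Z.of_nat (wbe t i)), (Z.of_nat (walp t i)). split; [lia|].
    rewrite <- !INR_IZR_INZ. reflexivity.
  - apply Hb. exists (wx t i). auto.
Qed.

Lemma part3_tuple R0 : incr_from q k R0 ->
  exists f : nat -> nat,
    (forall r : nat, has_card (fun z => (forall j, (1 <= j <= u)%nat -> Aset q R0 (T t j) z) /\ 1 <= z <= INR r) (f r)) /\
    Un_cv (fun r => INR (f r) / INR r) (cc q m (T t 1) 1 * (INR (MM t) / INR (aa t))).
Proof.
  intros Hinc.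
  assert (H1k : (1 <= 1 <= k)%nat) by lia.
  destruct (part3_limit (q t1) (q 1) m R0 (good q t) (INR (MM t) / INR (aa t))
              (fun z => forall j, (1 <= j <= u)%nat -> Aset q R0 (T t j) z)
              (Hdeg _ t1r) (Hdeg _ H1k) Hm (leadq _ t1r) (leadq _ H1k)) as [f [Hf1 Hf2]].
  - intros x y Hx Hxy. apply (Hinc 1%nat H1k); auto.
  - apply dens_tuple.
  - intros z. split.
    + intros H. destruct (H 1%nat ltac:(pose proof u_pos; lia)) as [HR0 [l [Hl E]]].
      split; auto. exists l. split; auto. split; [auto|].
      apply good_sol. intros i Hi. destruct (H i Hi) as [_ [l' [Hl' E']]].
      exists l'. split; auto. fold t1 in E. congruence.
    + intros [HR0 [n [Hn [E Hg]]]] j Hj. apply good_sol in Hg. destruct (Hg j Hj) as [l [Hl E']].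
      split; auto. exists l. split; auto. unfold t1 in *. rewrite E, E'. reflexivity.
  - exists f. split; [exact Hf1|].
    assert (Ec : cc q m (T t 1) 1 = / cfac (q t1) (q 1) m).
    { rewrite cc_inv; [rewrite cc_cfac; reflexivity| |]; apply leadq; [apply t1r|lia]. }
    rewrite Ec. exact Hf2.
Qed.

End Tuple.
Lemma valid_single s : (1 <= s <= k)%nat -> valid_tuple k [s].
Proof.
  intros H. split; [discriminate|]. split.
  - intros j Hj. simpl in Hj. lia.
  - intros x [<-|[]]; auto.
Qed.

Lemma Rsum_ones {A} (l : list A) : Rsum_list (map (fun _ => 1) l) = INR (length l).
Proof. induction l; simpl; [reflexivity|rewrite IHl; destruct (length l); simpl; ring]. Qed.

Lemma part3_union R0 : incr_from q k R0 ->
  let c := Rsum_list (map (fun t => (-1) ^ (S (length t)) * (cc q m (T t 1) 1 * (INR (MM t) / INR (aa t))))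
                      (nonempty_subseqs (seq 1 k))) in
  (exists f : nat -> nat,
     (forall r : nat, has_card (fun z => (exists i, (1 <= i <= k)%nat /\ Aset q R0 i z) /\ 1 <= z <= INR r) (f r)) /\
     Un_cv (fun r => INR (f r) / INR r) c) /\ 1 <= c.
Proof.
  intros Hinc c.
  set (NS := nonempty_subseqs (seq 1 k)).
  set (Lt := fun t => cc q m (T t 1) 1 * (INR (MM t) / INR (aa t))).
  set (St := fun (t : list nat) (r : nat) (z : R) => (forall j, (1 <= j <= length t)%nat -> Aset q R0 (T t j) z) /\ 1 <= z <= INR r).
  set (Ft := fun t => epsilon (inhabits (fun _ : nat => 0%nat))
                (fun f => (forall r, has_card (St t r) (f r)) /\ Un_cv (fun r => INR (f r) / INR r) (Lt t))).
  assert (HFt : forall t, In t NS -> (forall r, has_card (St t r) (Ft t r)) /\ Un_cv (fun r => INR (Ft t r) / INR r) (Lt t)).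
  { intros t Ht. unfold Ft.
    apply (epsilon_spec (inhabits (fun _ : nat => 0%nat))
                (fun f => (forall r, has_card (St t r) (f r)) /\ Un_cv (fun r => INR (f r) / INR r) (Lt t))).
    apply (part3_tuple t (valid_ns k t Ht) R0 Hinc). }
  set (Ur := fun (r : nat) (z : R) => (exists i, (1 <= i <= k)%nat /\ Aset q R0 i z) /\ 1 <= z <= INR r).
  assert (Hcov : forall k' r, (k' <= k)%nat -> exists L, forall z,
            ((exists i, (1 <= i <= k')%nat /\ Aset q R0 i z) /\ 1 <= z <= INR r) -> In z L).
  { induction k'; intros r Hk'.
    - exists nil. intros z [[i [Hi _]] _]. lia.
    - destruct (IHk' r ltac:(lia)) as [L1 HL1].
      destruct (part3_tuple [S k'] (valid_single (S k') ltac:(lia)) R0 Hinc) as [f [Hf _]].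
      destruct (Hf r) as [L2 [_ [_ HL2]]].
      exists (L1 ++ L2). intros z [[i [Hi Ai]] Hz]. apply in_or_app.
      destruct (Nat.eq_dec i (S k')) as [->|Ne].
      + right. apply HL2. split; auto. intros j Hj. simpl in Hj. replace j with 1%nat by lia. exact Ai.
      + left. apply HL1. split; auto. exists i. split; auto. lia. }
  set (fU := fun r => epsilon (inhabits 0%nat) (fun n => has_card (Ur r) n)).
  assert (HfU : forall r, has_card (Ur r) (fU r)).
  { intros r. unfold fU. apply epsilon_spec. destruct (Hcov k r (le_n _)) as [L HL].
    apply (has_card_exists (Ur r) L). intros z Hz. apply HL. exact Hz. }
  assert (Hid : forall r, INR (fU r) = Rsum_list (map (fun t => (-1) ^ (S (length t)) * INR (Ft t r)) NS)).
  { intros r. destruct (HfU r) as [LU [NLU [LLU HLU]]].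
    assert (E1 : forall t, In t NS -> INR (Ft t r) = Rsum_list (map (fun z => piz (fun s z => Aset q R0 s z) z t) LU)).
    { intros t Ht. rewrite (hc_count (St t r) (Ft t r) LU); auto.
      - rewrite ccount_Rsum. apply Rsum_ext. intros z Hz. apply HLU in Hz. destruct Hz as [_ Hz].
        unfold piz. f_equal. apply dec01_iff. unfold St. cbv beta.
        pose proof (forall_T_iff t (fun s => Aset q R0 s z)) as FT. cbv beta in FT. tauto.
      - apply HFt; auto.
      - intros z [Hz1 Hz2]. apply HLU. split; auto.
        pose proof (valid_ns k t Ht) as Hv. exists (T t 1). split.
        + apply T_range; auto. destruct Hv as [Hne _]. destruct t; [contradiction|simpl; lia].
        + apply Hz1. destruct Hv as [Hne _]. destruct t; [contradiction|simpl; lia]. }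
    rewrite (Rsum_ext _ (fun t => (-1) ^ (S (length t)) * Rsum_list (map (fun z => piz (fun s z => Aset q R0 s z) z t) LU)))
      by (intros t Ht; rewrite E1; auto).
    rewrite (Rsum_swap (fun t => (-1) ^ (S (length t))) (fun t z => piz (fun s z => Aset q R0 s z) z t)).
    rewrite (Rsum_ext _ (fun _ => 1)).
    - rewrite Rsum_ones. rewrite LLU. reflexivity.
    - intros z Hz. apply HLU in Hz. destruct Hz as [[i [Hi Ai]] _].
      apply (IE_main (fun s z => Aset q R0 s z) z (seq 1 k)). exists i. split; auto. apply in_seq. lia. }
  assert (Hcv : Un_cv (fun r => INR (fU r) / INR r) c).
  { apply approx_cv.
    apply approx_close with (y := fun r => Rsum_list (map (fun t => (-1) ^ (S (length t)) * INR (Ft t r)) NS)) (B := 0).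
    - intros r. rewrite Hid. replace (_ - _) with 0 by ring. rewrite Rabs_R0. lra.
    - apply (approx_sum (fun t => (-1) ^ (S (length t))) (fun t r => INR (Ft t r)) Lt NS).
      intros t Ht. apply cv_approx. apply HFt; auto. }
  split; [exists fU; split; auto|].
  set (a0 := (nfloor (Rmax R0 1) + 1)%nat).
  assert (Hlow : forall r : nat, INR r - INR a0 <= INR (fU r)).
  { intros r. destruct (HfU r) as [LU [NLU [LLU HLU]]].
    set (Lint := map INR (seq a0 (r + 1 - a0))).
    assert (Hle : (length Lint <= length LU)%nat).
    { apply NoDup_incl_length.
      - apply NoDup_map_inj_on; [apply seq_NoDup|]. intros x y _ _ E. apply INR_eq; auto.
      - intros z Hz. unfold Lint in Hz. apply in_map_iff in Hz. destruct Hz as [l [<- Hl]]. apply in_seq in Hl.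
        pose proof (nfloor_gt (Rmax R0 1)) as Hg.
        assert (Ha0 : Rmax R0 1 < INR a0) by (unfold a0; rewrite plus_INR; simpl; lra).
        assert (Hla : INR a0 <= INR l) by (apply le_INR; lia).
        pose proof (Rmax_l R0 1). pose proof (Rmax_r R0 1).
        apply HLU. split.
        + exists 1%nat. split; [lia|]. split; [lra|]. exists l. split; [|reflexivity].
          apply INR_le. simpl. lra.
        + split; [lra|]. apply le_INR; lia. }
    unfold Lint in Hle. rewrite length_map, length_seq in Hle. rewrite LLU in Hle.
    apply le_INR in Hle. destruct (le_lt_dec a0 r) as [h|h].
    - rewrite minus_INR in Hle by lia. rewrite plus_INR in Hle. simpl in Hle. lra.
    - apply lt_INR in h. pose proof (pos_INR (fU r)). lra. }
  destruct (Rle_or_lt 1 c) as [h|h]; auto. exfalso.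
  destruct (Hcv ((1 - c) / 2) ltac:(lra)) as [N HN].
  destruct (nat_above (2 * INR a0 / (1 - c))) as [N2 HN2].
  set (n := (N + N2 + 1)%nat).
  specialize (HN n ltac:(unfold n; lia)). unfold R_dist in HN. apply Rabs_def2 in HN.
  specialize (Hlow n).
  assert (Hn0 : 0 < INR n) by (apply lt_0_INR; unfold n; lia).
  assert (Hn2 : INR N2 <= INR n) by (apply le_INR; unfold n; lia).
  assert (INR (fU n) / INR n >= 1 - INR a0 / INR n).
  { apply Rle_ge. apply Rmult_le_reg_r with (INR n); auto.
    replace ((1 - INR a0 / INR n) * INR n) with (INR n - INR a0) by (field; lra).
    replace (INR (fU n) / INR n * INR n) with (INR (fU n)) by (field; lra). lra. }
  assert (INR a0 / INR n < (1 - c) / 2).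
  { apply Rmult_lt_reg_r with (INR n); auto.
    replace (INR a0 / INR n * INR n) with (INR a0) by (field; lra).
    assert (Hq : 2 * INR a0 / (1 - c) < INR n) by lra.
    apply Rmult_lt_compat_l with (r := (1 - c) / 2) in Hq; [|lra].
    replace ((1 - c) / 2 * (2 * INR a0 / (1 - c))) with (INR a0) in Hq by (field; lra). lra. }
  lra.
Qed.

End Main.


Theorem lemma4p1 (k m : nat) (q : nat -> list R)
  (Hk : (1 <= k)%nat) (Hm : (1 <= m)%nat)
  (Hdeg : forall i, (1 <= i <= k)%nat -> has_degree (q i) m)
  (Hinf : forall i, (1 <= i <= k)%nat -> tends_to_infty (peval (q i))) :
  exists M a : list nat -> nat,
    (forall t : list nat, valid_tuple k t ->
       let u := length t in
       (0 < a t)%nat /\ (M t <= a t)%nat /\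
       Un_cv (fun r => INR (cnt (good q t) r) / INR r) (INR (M t) / INR (a t)) /\
       (u = 1%nat -> M t = 1%nat /\ a t = 1%nat) /\
       (* (1) *)
       ((1 < u)%nat ->
        forall (al be : nat -> nat) (x : nat -> R),
          (forall i, (2 <= i <= u)%nat ->
             (0 < al i)%nat /\ (0 < be i)%nat /\ Nat.gcd (al i) (be i) = 1%nat /\
             cc q m (T t i) (T t 1) = INR (be i) / INR (al i) /\
             is_rat (x i) /\ shift_id q m t i (x i)) ->
          a t = lcm_list (map al (idx2 u)) /\ M t = Mformula u al be x) /\
       (* (2) *)
       ((1 < u)%nat ->
        (exists i, (2 <= i <= u)%nat /\
           (~ is_rat (cc q m (T t i) (T t 1)) \/
            (is_rat (cc q m (T t i) (T t 1)) /\
             ~ (exists xi, is_rat xi /\ shift_id q m t i xi)))) ->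
        M t = 0%nat) /\
       (* (3), first limit *)
       (forall R0 : R, incr_from q k R0 ->
          exists f : nat -> nat,
            (forall r : nat,
               has_card (fun z => (forall j, (1 <= j <= u)%nat -> Aset q R0 (T t j) z)
                                  /\ 1 <= z <= INR r) (f r)) /\
            Un_cv (fun r => INR (f r) / INR r)
                  (cc q m (T t 1) 1 * (INR (M t) / INR (a t))))) /\
    (* (3), second limit *)
    (forall R0 : R, incr_from q k R0 ->
       let c := Rsum_list
                  (map (fun t => (-1) ^ (S (length t)) *
                                 (cc q m (T t 1) 1 * (INR (M t) / INR (a t))))
                       (nonempty_subseqs (seq 1 k))) in
       (exists f : nat -> nat,
          (forall r : nat,
             has_card (fun z => (exists i, (1 <= i <= k)%nat /\ Aset q R0 i z)
                                /\ 1 <= z <= INR r) (f r)) /\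
          Un_cv (fun r => INR (f r) / INR r) c) /\
       1 <= c).
Proof.
  exists (MM m q), (aa m q). split.
  - intros t Ht u. split; [|split; [|split; [|split; [|split; [|split]]]]].
    + apply (aa_pos k m q Hk Hm).
    + apply (MM_le k m q Hk Hm).
    + apply approx_cv. apply (dens_tuple k m q Hk Hm Hdeg Hinf t Ht).
    + intros Hu. unfold MM, aa. fold u. rewrite Hu. simpl. auto.
    + intros Hu al be x H1. apply (part1 k m q Hk Hm Hdeg Hinf t Ht Hu al be x H1).
    + intros Hu Hb. apply (part2 k m q Hk Hm t Hu Hb).
    + intros R0 HR0. apply (part3_tuple k m q Hk Hm Hdeg Hinf t Ht R0 HR0).
  - intros R0 HR0. apply (part3_union k m q Hk Hm Hdeg Hinf R0 HR0).
Qed.
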